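(* Let $\{\mathcal H,\Gamma\}$ be an isometric boundary pair for $A^*$ with domain $A_*=\operatorname{dom}\Gamma$ dense in $A^*$, and let $\widetilde A=\mathcal J(\Gamma)$ be its main transform. Assume there is a selfadjoint extension $H$ of $A$ with $H\subset A_*$ and a point $x\in\rho(H)\cap\mathbb R$, and let $M(x)=\{\hat h\in\mathcal H^2:\{\{f,xf\},\hat h\}\in\Gamma\text{ for some }f\in\mathfrak H\}$. Then: (i) the following are equivalent: (a) $M(x)$ is a selfadjoint relation in $\mathcal H$ and $0\in\rho(M(x)+xI)$; (b) $x\in\rho(\widetilde A)$; (ii) if (a)/(b) hold, then $\{\mathcal H,\Gamma\}$ is a unitary boundary pair for $A^*$ and its Weyl family $M(\lambda)=\{\hat h:\{\{f,\lambda f\},\hat h\}\in\Gamma\}$, $\lambda\in\mathbb C\setminus\mathbb R$, belongs to $\widetilde{\mathcal R}(\mathcal H)$.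
   Context: $A$ closed symmetric relation in a Hilbert space $\mathfrak H$; $\mathcal H$ a Hilbert space. A linear relation $\Gamma\subset\mathfrak H^2\times\mathcal H^2$ is isometric if $(f',g)-(f,g')=(h',k)-(h,k')$ for all $\{\{f,f'\},\{h,h'\}\},\{\{g,g'\},\{k,k'\}\}\in\Gamma$ and unitary if moreover $\Gamma^{-1}=\Gamma^{[*]}$, where $\Gamma^{[*]}=\{\{\{k,k'\},\{g,g'\}\}:(f',g)-(f,g')=(h',k)-(h,k')\ \forall\{\{f,f'\},\{h,h'\}\}\in\Gamma\}$. An isometric (unitary) boundary pair for $A^*$ is an isometric (unitary) $\Gamma$ with $\operatorname{dom}\Gamma\subset A^*$ dense in $A^*$. Main transform: $\mathcal J(\Gamma)=\{\{\{f,h\},\{f',-h'\}\}:\{\{f,f'\},\{h,h'\}\}\in\Gamma\}$, a linear relation in $\mathfrak H\oplus\mathcal H$. $\widetilde{\mathcal R}(\mathcal H)$ (Nevanlinna families): families of linear relations $M(\lambda)$, $\lambda\in\mathbb C\setminus\mathbb R$, in $\mathcal H$ with $M(\lambda)$ maximal dissipative for $\lambda\in\mathbb C_+$ (maximal accumulative for $\lambda\in\mathbb C_-$), $M(\lambda)^*=M(\bar\lambda)$, and $(M(\lambda)+\mu)^{-1}\in\mathcal B(\mathcal H)$ holomorphic in $\lambda\in\mathbb C_+$ ($\mathbb C_-$) for some (all) $\mu\in\mathbb C_+$ ($\mathbb C_-$). *)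

(* Defs.v *)
From Stdlib Require Import Reals.
Open Scope R_scope.

Record C := mkC { Cre : R ; Cim : R }.
Definition C0 : C := mkC 0 0.
Definition C1 : C := mkC 1 0.
Definition RtoC (x : R) : C := mkC x 0.
Definition Cadd (a b : C) : C := mkC (Cre a + Cre b) (Cim a + Cim b).
Definition Copp (a : C) : C := mkC (- Cre a) (- Cim a).
Definition Csub (a b : C) : C := Cadd a (Copp b).
Definition Cmul (a b : C) : C :=
  mkC (Cre a * Cre b - Cim a * Cim b) (Cre a * Cim b + Cim a * Cre b).
Definition Cconj (a : C) : C := mkC (Cre a) (- Cim a).
Definition Cmod (a : C) : R := sqrt (Cre a * Cre a + Cim a * Cim a).
Definition Cinv (a : C) : C :=
  mkC (Cre a / (Cre a * Cre a + Cim a * Cim a))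
      (- Cim a / (Cre a * Cre a + Cim a * Cim a)).

(* ---------- Complex Hilbert spaces ----------
   inner product linear in the first, conjugate-linear in the second argument *)
Record HilbertSpace := {
  hs_car :> Type;
  hs_zero : hs_car;
  hs_add : hs_car -> hs_car -> hs_car;
  hs_opp : hs_car -> hs_car;
  hs_scal : C -> hs_car -> hs_car;
  hs_inner : hs_car -> hs_car -> C;
  hs_add_assoc : forall x y z, hs_add x (hs_add y z) = hs_add (hs_add x y) z;
  hs_add_comm : forall x y, hs_add x y = hs_add y x;
  hs_add_0 : forall x, hs_add x hs_zero = x;
  hs_add_opp : forall x, hs_add x (hs_opp x) = hs_zero;
  hs_scal_assoc : forall a b x, hs_scal a (hs_scal b x) = hs_scal (Cmul a b) x;
  hs_scal_1 : forall x, hs_scal C1 x = x;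
  hs_scal_distr_v : forall a x y, hs_scal a (hs_add x y) = hs_add (hs_scal a x) (hs_scal a y);
  hs_scal_distr_s : forall a b x, hs_scal (Cadd a b) x = hs_add (hs_scal a x) (hs_scal b x);
  hs_inner_add_l : forall x y z, hs_inner (hs_add x y) z = Cadd (hs_inner x z) (hs_inner y z);
  hs_inner_scal_l : forall a x y, hs_inner (hs_scal a x) y = Cmul a (hs_inner x y);
  hs_inner_sym : forall x y, hs_inner y x = Cconj (hs_inner x y);
  hs_inner_pos : forall x, 0 <= Cre (hs_inner x x);
  hs_inner_def : forall x, hs_inner x x = C0 -> x = hs_zero;
  hs_complete : forall u : nat -> hs_car,
    (forall eps, 0 < eps -> exists N, forall m n, (N <= m)%nat -> (N <= n)%nat ->
       sqrt (Cre (hs_inner (hs_add (u m) (hs_opp (u n))) (hs_add (u m) (hs_opp (u n))))) < eps) ->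
    exists l, forall eps, 0 < eps -> exists N, forall n, (N <= n)%nat ->
       sqrt (Cre (hs_inner (hs_add (u n) (hs_opp l)) (hs_add (u n) (hs_opp l)))) < eps
}.

Arguments hs_zero {h}.
Definition vadd {X : HilbertSpace} (x y : X) : X := hs_add X x y.
Definition vopp {X : HilbertSpace} (x : X) : X := hs_opp X x.
Definition vsub {X : HilbertSpace} (x y : X) : X := vadd x (vopp y).
Definition vscal {X : HilbertSpace} (a : C) (x : X) : X := hs_scal X a x.
Definition ip {X : HilbertSpace} (x y : X) : C := hs_inner X x y.
Definition nrm {X : HilbertSpace} (x : X) : R := sqrt (Cre (ip x x)).
Definition pnrm {X Y : HilbertSpace} (x : X) (y : Y) : R :=
  sqrt (nrm x * nrm x + nrm y * nrm y).

Definition converges {X : HilbertSpace} (u : nat -> X) (l : X) : Prop :=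
  forall eps, 0 < eps -> exists N, forall n, (N <= n)%nat -> nrm (vsub (u n) l) < eps.

Definition linrel {X : HilbertSpace} (T : X -> X -> Prop) : Prop :=
  T hs_zero hs_zero /\
  forall (a : C) f f' g g', T f f' -> T g g' -> T (vadd f (vscal a g)) (vadd f' (vscal a g')).

Definition closed_rel {X : HilbertSpace} (T : X -> X -> Prop) : Prop :=
  forall (u v : nat -> X) f f', (forall n, T (u n) (v n)) ->
    converges u f -> converges v f' -> T f f'.

Definition symmetric_rel {X : HilbertSpace} (T : X -> X -> Prop) : Prop :=
  forall f f' g g', T f f' -> T g g' -> ip f' g = ip f g'.

Definition adj {X : HilbertSpace} (T : X -> X -> Prop) (g g' : X) : Prop :=
  forall f f', T f f' -> ip f' g = ip f g'.

Definition selfadjoint {X : HilbertSpace} (T : X -> X -> Prop) : Prop :=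
  forall g g', T g g' <-> adj T g g'.

(* z in rho(T): (T - z)^{-1} = {(f' - z f, f) : (f,f') in T} is (the graph of)
   an everywhere defined bounded operator *)
Definition in_resolvent {X : HilbertSpace} (T : X -> X -> Prop) (z : C) : Prop :=
  (forall f1 f1' f2 f2', T f1 f1' -> T f2 f2' ->
      vsub f1' (vscal z f1) = vsub f2' (vscal z f2) -> f1 = f2) /\
  (forall g, exists f f', T f f' /\ vsub f' (vscal z f) = g) /\
  (exists c, forall f f', T f f' -> nrm f <= c * nrm (vsub f' (vscal z f))).

(* same notion for a relation T in the orthogonal sum X (+) Y,
   T (f,h) (f',h') meaning {{f,h},{f',h'}} in T *)
Definition in_resolvent2 {X Y : HilbertSpace} (T : X -> Y -> X -> Y -> Prop) (z : C) : Prop :=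
  (forall f1 h1 f1' h1' f2 h2 f2' h2', T f1 h1 f1' h1' -> T f2 h2 f2' h2' ->
      vsub f1' (vscal z f1) = vsub f2' (vscal z f2) ->
      vsub h1' (vscal z h1) = vsub h2' (vscal z h2) -> f1 = f2 /\ h1 = h2) /\
  (forall g k, exists f h f' h', T f h f' h' /\
      vsub f' (vscal z f) = g /\ vsub h' (vscal z h) = k) /\
  (exists c, forall f h f' h', T f h f' h' ->
      pnrm f h <= c * pnrm (vsub f' (vscal z f)) (vsub h' (vscal z h))).

Definition dissipative {X : HilbertSpace} (T : X -> X -> Prop) : Prop :=
  forall h h', T h h' -> 0 <= Cim (ip h' h).
Definition accumulative {X : HilbertSpace} (T : X -> X -> Prop) : Prop :=
  forall h h', T h h' -> Cim (ip h' h) <= 0.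
Definition max_dissipative {X : HilbertSpace} (T : X -> X -> Prop) : Prop :=
  linrel T /\ dissipative T /\
  forall S, linrel S -> dissipative S -> (forall h h', T h h' -> S h h') ->
    forall h h', S h h' -> T h h'.
Definition max_accumulative {X : HilbertSpace} (T : X -> X -> Prop) : Prop :=
  linrel T /\ accumulative T /\
  forall S, linrel S -> accumulative S -> (forall h h', T h h' -> S h h') ->
    forall h h', S h h' -> T h h'.

(* ---------- Boundary pairs ----------
   Gamma f f' h h'  means  {{f,f'},{h,h'}} in Gamma *)
Definition linrel4 {X Y : HilbertSpace} (G : X -> X -> Y -> Y -> Prop) : Prop :=
  G hs_zero hs_zero hs_zero hs_zero /\
  forall (a : C) f f' h h' g g' k k', G f f' h h' -> G g g' k k' ->
    G (vadd f (vscal a g)) (vadd f' (vscal a g')) (vadd h (vscal a k)) (vadd h' (vscal a k')).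

Definition isometric {X Y : HilbertSpace} (G : X -> X -> Y -> Y -> Prop) : Prop :=
  linrel4 G /\
  forall f f' h h' g g' k k', G f f' h h' -> G g g' k k' ->
    Csub (ip f' g) (ip f g') = Csub (ip h' k) (ip h k').

(* {k^, g^} in Gamma^[*] *)
Definition bstar {X Y : HilbertSpace} (G : X -> X -> Y -> Y -> Prop)
  (k k' : Y) (g g' : X) : Prop :=
  forall f f' h h', G f f' h h' -> Csub (ip f' g) (ip f g') = Csub (ip h' k) (ip h k').

(* unitary: isometric and Gamma^{-1} = Gamma^[*] *)
Definition unitary {X Y : HilbertSpace} (G : X -> X -> Y -> Y -> Prop) : Prop :=
  isometric G /\ forall g g' k k', G g g' k k' <-> bstar G k k' g g'.

Definition dom_dense_in_adj {X Y : HilbertSpace} (A : X -> X -> Prop)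
  (G : X -> X -> Y -> Y -> Prop) : Prop :=
  (forall f f' h h', G f f' h h' -> adj A f f') /\
  (forall g g', adj A g g' -> forall eps, 0 < eps ->
     exists f f' h h', G f f' h h' /\ pnrm (vsub f g) (vsub f' g') < eps).

Definition isometric_boundary_pair {X Y : HilbertSpace} (A : X -> X -> Prop)
  (G : X -> X -> Y -> Y -> Prop) : Prop := isometric G /\ dom_dense_in_adj A G.
Definition unitary_boundary_pair {X Y : HilbertSpace} (A : X -> X -> Prop)
  (G : X -> X -> Y -> Y -> Prop) : Prop := unitary G /\ dom_dense_in_adj A G.

Definition main_transform {X Y : HilbertSpace} (G : X -> X -> Y -> Y -> Prop)
  (f : X) (h : Y) (f' : X) (k : Y) : Prop :=
  exists h', k = vopp h' /\ G f f' h h'.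

Definition weyl {X Y : HilbertSpace} (G : X -> X -> Y -> Y -> Prop) (z : C)
  (h h' : Y) : Prop := exists f, G f (vscal z f) h h'.

Definition rel_plus_scal {Y : HilbertSpace} (T : Y -> Y -> Prop) (z : C) (h k : Y) : Prop :=
  exists h', T h h' /\ k = vadd h' (vscal z h).

(* (M(l) + mu)^{-1} in B(Y) for l with P l, and holomorphic (operator norm) in l *)
Definition resolvent_holomorphic {Y : HilbertSpace} (M : C -> Y -> Y -> Prop)
  (mu : C) (P : C -> Prop) : Prop :=
  exists Rf : C -> Y -> Y,
    (forall l, P l -> forall u v, M l v (vsub u (vscal mu v)) <-> Rf l u = v) /\
    (forall l, P l ->
       (forall (a : C) u w, Rf l (vadd u (vscal a w)) = vadd (Rf l u) (vscal a (Rf l w))) /\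
       exists c, forall u, nrm (Rf l u) <= c * nrm u) /\
    (forall l, P l -> exists D : Y -> Y, forall eps, 0 < eps -> exists delta, 0 < delta /\
       forall eta, 0 < Cmod eta < delta -> P (Cadd l eta) -> forall u,
         nrm (vsub (vscal (Cinv eta) (vsub (Rf (Cadd l eta) u) (Rf l u))) (D u))
           <= eps * nrm u).

Definition nevanlinna_family {Y : HilbertSpace} (M : C -> Y -> Y -> Prop) : Prop :=
  (forall l, 0 < Cim l -> max_dissipative (M l)) /\
  (forall l, Cim l < 0 -> max_accumulative (M l)) /\
  (forall l, Cim l <> 0 -> forall h h', adj (M l) h h' <-> M (Cconj l) h h') /\
  (exists mu, 0 < Cim mu /\ resolvent_holomorphic M mu (fun l => 0 < Cim l)) /\
  (exists mu, Cim mu < 0 /\ resolvent_holomorphic M mu (fun l => Cim l < 0)).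

(* Main.v *)
Require Import Defs.
From Stdlib Require Import Reals.
Open Scope R_scope.

From Stdlib Require Import Lra Lia Psatz Ring Field ClassicalEpsilon Classical ZArith FunctionalExtensionality.
Import Defs.


Lemma C_ext : forall a b : C, Cre a = Cre b -> Cim a = Cim b -> a = b.
Proof. intros [a1 a2] [b1 b2]; simpl; intros -> ->; reflexivity. Qed.

Lemma Cring_th : ring_theory C0 C1 Cadd Cmul Csub Copp (@eq C).
Proof.
  constructor; intros; apply C_ext; unfold Cadd, Cmul, Csub, Copp, C0, C1; simpl; ring.
Qed.
Add Ring Cring : Cring_th.

Lemma Cconj_add a b : Cconj (Cadd a b) = Cadd (Cconj a) (Cconj b).
Proof. apply C_ext; simpl; ring. Qed.
Lemma Cconj_mul a b : Cconj (Cmul a b) = Cmul (Cconj a) (Cconj b).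
Proof. apply C_ext; simpl; ring. Qed.
Lemma Cconj_opp a : Cconj (Copp a) = Copp (Cconj a).
Proof. apply C_ext; simpl; ring. Qed.
Lemma Cconj_sub a b : Cconj (Csub a b) = Csub (Cconj a) (Cconj b).
Proof. apply C_ext; simpl; ring. Qed.
Lemma Cconj_conj a : Cconj (Cconj a) = a.
Proof. apply C_ext; simpl; ring. Qed.
Lemma Cconj_R x : Cconj (RtoC x) = RtoC x.
Proof. apply C_ext; simpl; ring. Qed.
Lemma Cconj_0 : Cconj C0 = C0.
Proof. apply C_ext; simpl; ring. Qed.
Lemma Cconj_1 : Cconj C1 = C1.
Proof. apply C_ext; simpl; ring. Qed.

Ltac Csimp := repeat rewrite ?Cconj_add, ?Cconj_mul, ?Cconj_opp, ?Cconj_sub, ?Cconj_conj, ?Cconj_R, ?Cconj_0, ?Cconj_1.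

Lemma Cmul_inv_l a : a <> C0 -> Cmul (Cinv a) a = C1.
Proof.
  intro H. assert (Hn : Cre a * Cre a + Cim a * Cim a <> 0).
  { intro E. apply H. apply C_ext; simpl; nra. }
  apply C_ext; unfold Cinv, Cmul; simpl; field; auto.
Qed.

Lemma Cmod_pos a : a <> C0 -> 0 < Cmod a.
Proof.
  intro H. unfold Cmod. apply sqrt_lt_R0.
  destruct (Req_dec (Cre a) 0); destruct (Req_dec (Cim a) 0).
  - exfalso; apply H; apply C_ext; simpl; auto.
  - nra. - nra. - nra.
Qed.

Lemma Cmod_ge_im a : Rabs (Cim a) <= Cmod a.
Proof.
  unfold Cmod. rewrite <- sqrt_Rsqr_abs. apply sqrt_le_1_alt. unfold Rsqr. nra.
Qed.
Lemma Cmod_ge_re a : Rabs (Cre a) <= Cmod a.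
Proof.
  unfold Cmod. rewrite <- sqrt_Rsqr_abs. apply sqrt_le_1_alt. unfold Rsqr. nra.
Qed.
Lemma Cmod_ge0 a : 0 <= Cmod a.
Proof. unfold Cmod; apply sqrt_pos. Qed.
Lemma Cmod_sq a : Cmod a * Cmod a = Cre a * Cre a + Cim a * Cim a.
Proof. unfold Cmod; rewrite sqrt_sqrt; nra. Qed.
Lemma Cmod_mul a b : Cmod (Cmul a b) = Cmod a * Cmod b.
Proof.
  unfold Cmod. rewrite <- sqrt_mult by nra. f_equal. simpl; ring.
Qed.
Lemma Cmod_R x : Cmod (RtoC x) = Rabs x.
Proof. unfold Cmod; simpl. rewrite <- sqrt_Rsqr_abs. f_equal. unfold Rsqr; ring. Qed.
Lemma Cmod_opp a : Cmod (Copp a) = Cmod a.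
Proof. unfold Cmod; simpl; f_equal; ring. Qed.
Lemma Cmod_add a b : Cmod (Cadd a b) <= Cmod a + Cmod b.
Proof.
  pose proof (Cmod_ge0 a); pose proof (Cmod_ge0 b).
  apply Rsqr_incr_0_var; [|nra]. unfold Rsqr.
  rewrite Cmod_sq. simpl.
  replace ((Cmod a + Cmod b) * (Cmod a + Cmod b)) with (Cmod a * Cmod a + Cmod b * Cmod b + 2 * (Cmod a * Cmod b)) by ring.
  rewrite !Cmod_sq.
  assert (Cre a * Cre b + Cim a * Cim b <= Cmod a * Cmod b).
  { destruct (Rle_dec (Cre a * Cre b + Cim a * Cim b) 0). nra.
    apply Rsqr_incr_0_var; [|nra]. unfold Rsqr.
    replace (Cmod a * Cmod b * (Cmod a * Cmod b)) with ((Cmod a * Cmod a) * (Cmod b * Cmod b)) by ring.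
    rewrite !Cmod_sq. pose proof (Rle_0_sqr (Cre a * Cim b - Cim a * Cre b)). unfold Rsqr in *. nra. }
  nra.
Qed.


Section Hbasic.
Context {X : HilbertSpace}.
Implicit Types u v w : X.

Lemma vadd_assoc u v w : vadd u (vadd v w) = vadd (vadd u v) w.
Proof. apply hs_add_assoc. Qed.
Lemma vadd_comm u v : vadd u v = vadd v u.
Proof. apply hs_add_comm. Qed.
Lemma vadd_0 u : vadd u hs_zero = u.
Proof. apply hs_add_0. Qed.
Lemma vadd_opp u : vadd u (vopp u) = hs_zero.
Proof. apply hs_add_opp. Qed.

Lemma ip_add_l u v w : ip (vadd u v) w = Cadd (ip u w) (ip v w).
Proof. apply hs_inner_add_l. Qed.
Lemma ip_scal_l a u w : ip (vscal a u) w = Cmul a (ip u w).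
Proof. apply hs_inner_scal_l. Qed.
Lemma ip_sym u v : ip v u = Cconj (ip u v).
Proof. apply hs_inner_sym. Qed.

Lemma ip_zero_l w : ip (@hs_zero X) w = C0.
Proof.
  assert (E : ip (@hs_zero X) w = Cadd (ip (@hs_zero X) w) (ip (@hs_zero X) w)).
  { rewrite <- ip_add_l. unfold vadd. now rewrite hs_add_0. }
  pose proof (f_equal Cre E) as E1; pose proof (f_equal Cim E) as E2; simpl in E1, E2.
  apply C_ext; simpl; lra.
Qed.

Lemma ip_opp_l u w : ip (vopp u) w = Copp (ip u w).
Proof.
  assert (E : Cadd (ip u w) (ip (vopp u) w) = C0).
  { rewrite <- ip_add_l, vadd_opp. apply ip_zero_l. }
  transitivity (Cadd (Cadd (ip u w) (ip (vopp u) w)) (Copp (ip u w))). ring.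
  rewrite E. ring.
Qed.

Lemma ip_sub_l u v w : ip (vsub u v) w = Csub (ip u w) (ip v w).
Proof. unfold vsub. rewrite ip_add_l, ip_opp_l. reflexivity. Qed.

Lemma ip_add_r u v w : ip w (vadd u v) = Cadd (ip w u) (ip w v).
Proof. rewrite ip_sym, ip_add_l, Cconj_add, <- !ip_sym. reflexivity. Qed.
Lemma ip_scal_r a u w : ip w (vscal a u) = Cmul (Cconj a) (ip w u).
Proof. rewrite ip_sym, ip_scal_l, Cconj_mul, <- !ip_sym. reflexivity. Qed.
Lemma ip_opp_r u w : ip w (vopp u) = Copp (ip w u).
Proof. rewrite ip_sym, ip_opp_l, Cconj_opp, <- !ip_sym. reflexivity. Qed.
Lemma ip_sub_r u v w : ip w (vsub u v) = Csub (ip w u) (ip w v).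
Proof. unfold vsub. rewrite ip_add_r, ip_opp_r. reflexivity. Qed.
Lemma ip_zero_r w : ip w (@hs_zero X) = C0.
Proof. rewrite ip_sym, ip_zero_l. apply Cconj_0. Qed.

Lemma ip_self_im u : Cim (ip u u) = 0.
Proof. pose proof (ip_sym u u) as E. apply (f_equal Cim) in E. simpl in E. lra. Qed.
Lemma ip_self_re_ge0 u : 0 <= Cre (ip u u).
Proof. apply hs_inner_pos. Qed.
Lemma ip_self_eta u : ip u u = RtoC (Cre (ip u u)).
Proof. apply C_ext; simpl; auto using ip_self_im. Qed.

Lemma ip_self_zero u : Cre (ip u u) = 0 -> u = hs_zero.
Proof. intro H. apply hs_inner_def. apply C_ext; simpl; auto using ip_self_im. Qed.

Lemma vsub_zero u v : vsub u v = hs_zero -> u = v.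
Proof.
  intro H. unfold vsub in H.
  transitivity (vadd (vadd u (vopp v)) v).
  - rewrite <- vadd_assoc. rewrite (vadd_comm (vopp v) v), vadd_opp, vadd_0. reflexivity.
  - rewrite H. rewrite vadd_comm. apply vadd_0.
Qed.

Lemma vec_ext u v : (forall w, ip u w = ip v w) -> u = v.
Proof.
  intro H. apply vsub_zero. apply ip_self_zero.
  change (Cre (ip (vsub u v) (vsub u v)) = 0). rewrite ip_sub_l, H. replace (Csub _ _) with C0 by ring. reflexivity.
Qed.

Lemma vec_ext_r u v : (forall w, ip w u = ip w v) -> u = v.
Proof. intro H. apply vec_ext. intro w. rewrite (ip_sym w u), (ip_sym w v), H. reflexivity. Qed.

End Hbasic.


Ltac ipexp := repeat rewrite ?ip_add_l, ?ip_scal_l, ?ip_opp_l, ?ip_sub_l, ?ip_zero_l.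
Ltac veq := apply vec_ext; let w := fresh "w" in intro w; ipexp; try ring.

Ltac use_eq E := match type of E with ?a = ?b => match goal with |- ?c = ?d =>
   let Z := fresh "Z" in assert (Z : Csub a b = C0) by (rewrite E; ring);
   first [ transitivity (Cadd d (Csub a b)); [ring | rewrite Z; ring]
         | transitivity (Cadd d (Copp (Csub a b))); [ring | rewrite Z; ring] ] end end.

Ltac vuse Ev := apply vec_ext; let w := fresh "w" in intro w;
  let E := fresh "E" in pose proof (f_equal (fun t => ip t w) Ev) as E; cbv beta in E;
  ipexp; repeat rewrite ?ip_add_l, ?ip_scal_l, ?ip_opp_l, ?ip_sub_l, ?ip_zero_l in E; use_eq E.


Section Norms.
Context {X : HilbertSpace}.
Implicit Types u v w : X.

Lemma test_veq u v : vsub (vadd u v) v = u.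
Proof. veq. Qed.

Lemma nrm_ge0 u : 0 <= nrm u.
Proof. unfold nrm; apply sqrt_pos. Qed.
Lemma nrm_sq u : nrm u * nrm u = Cre (ip u u).
Proof. unfold nrm. rewrite sqrt_sqrt; auto using ip_self_re_ge0. Qed.
Lemma nrm_zero : nrm (@hs_zero X) = 0.
Proof. unfold nrm. rewrite ip_zero_l. simpl. apply sqrt_0. Qed.
Lemma nrm_eq0 u : nrm u = 0 -> u = hs_zero.
Proof. intro H. apply ip_self_zero. rewrite <- nrm_sq, H. ring. Qed.

Lemma CS_sq u v : Cre (ip u v) * Cre (ip u v) + Cim (ip u v) * Cim (ip u v)
   <= Cre (ip u u) * Cre (ip v v).
Proof.
  destruct (Req_dec (Cre (ip v v)) 0) as [E|E].
  - apply ip_self_zero in E. subst v. rewrite ip_zero_r. simpl.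
    pose proof (ip_self_re_ge0 u). pose proof (ip_self_re_ge0 (@hs_zero X)). nra.
  - pose proof (ip_self_re_ge0 v) as Hv.
    set (t := / Cre (ip v v)).
    pose proof (ip_self_re_ge0 (vsub u (vscal (Cmul (RtoC t) (ip u v)) v))) as P.
    rewrite ip_sub_l, !ip_sub_r, ip_scal_l, !ip_scal_r, ip_scal_l in P.
    rewrite (ip_sym u v) in P.
    rewrite (ip_self_eta u), (ip_self_eta v) in P.
    rewrite (ip_self_eta u), (ip_self_eta v).
    set (c := ip u v) in *. set (a := Cre (ip u u)) in *. set (b := Cre (ip v v)) in *.
    destruct c as [c1 c2]. simpl in P |- *.
    assert (Hb : 0 < b) by lra.
    assert (Ht : t * b = 1) by (unfold t; field; lra).
    assert (0 <= t) by (unfold t; apply Rlt_le, Rinv_0_lt_compat; lra).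
    assert (Ht2 : t * t * b = t) by (rewrite Rmult_assoc, Ht; ring).
    assert (0 <= a - t * (c1*c1+c2*c2)).
    { replace (a - t * (c1*c1+c2*c2)) with (a - 2 * t * (c1*c1+c2*c2) + (t*t*b) * (c1*c1+c2*c2)) by (rewrite Ht2; ring).
      eapply Rle_trans; [apply P|]. right; ring. }
    assert (Hq : 0 <= (a - t * (c1*c1+c2*c2)) * b) by (apply Rmult_le_pos; lra).
    replace ((a - t * (c1*c1+c2*c2)) * b) with (a * b - (c1*c1+c2*c2) * (t * b)) in Hq by ring.
    rewrite Ht in Hq. lra.
Qed.

Lemma CS u v : Cmod (ip u v) <= nrm u * nrm v.
Proof.
  unfold Cmod, nrm. rewrite <- sqrt_mult by apply ip_self_re_ge0.
  apply sqrt_le_1_alt. apply CS_sq.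
Qed.

Lemma nrm_scal a u : nrm (vscal a u) = Cmod a * nrm u.
Proof.
  unfold nrm, Cmod. rewrite <- sqrt_mult by (nra || apply ip_self_re_ge0).
  f_equal. rewrite ip_scal_l, ip_scal_r, (ip_self_eta u). destruct a; simpl; ring.
Qed.

Lemma nrm_opp u : nrm (vopp u) = nrm u.
Proof. unfold nrm. rewrite ip_opp_l, ip_opp_r. f_equal. simpl. ring. Qed.

Lemma nrm_triangle u v : nrm (vadd u v) <= nrm u + nrm v.
Proof.
  pose proof (nrm_ge0 u); pose proof (nrm_ge0 v).
  apply Rsqr_incr_0_var; [|nra]. unfold Rsqr. rewrite nrm_sq.
  rewrite ip_add_l, !ip_add_r. rewrite (ip_sym u v). simpl.
  pose proof (CS u v). pose proof (Cmod_ge_re (ip u v)).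
  rewrite <- !nrm_sq. assert (Cre (ip u v) <= nrm u * nrm v) by (apply Rabs_le_inv in H2 || idtac; unfold Rabs in H2; destruct (Rcase_abs (Cre (ip u v))); lra).
  nra.
Qed.

Lemma nrm_sub_triangle u v : nrm (vsub u v) <= nrm u + nrm v.
Proof. unfold vsub. rewrite <- (nrm_opp v). apply nrm_triangle. Qed.

Lemma nrm_sub_sym u v : nrm (vsub u v) = nrm (vsub v u).
Proof. replace (vsub u v) with (vopp (vsub v u)) by veq. apply nrm_opp. Qed.

Lemma nrm_sub3 u v w : nrm (vsub u w) <= nrm (vsub u v) + nrm (vsub v w).
Proof. replace (vsub u w) with (vadd (vsub u v) (vsub v w)) by veq. apply nrm_triangle. Qed.

Lemma nrm_rev_triangle u v : nrm u - nrm v <= nrm (vsub u v).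
Proof.
  pose proof (nrm_triangle (vsub u v) v). replace (vadd (vsub u v) v) with u in H by veq. lra.
Qed.

Lemma ip_bound u w : nrm w <= 1 -> Cmod (ip u w) <= nrm u.
Proof. intro. pose proof (CS u w). pose proof (nrm_ge0 u). nra. Qed.

End Norms.


Section Conv.
Context {X : HilbertSpace}.
Implicit Types u v w : X.

Lemma cauchy_conv (u : nat -> X) :
  (forall eps, 0 < eps -> exists N, forall m n, (N <= m)%nat -> (N <= n)%nat -> nrm (vsub (u m) (u n)) < eps) ->
  exists l, converges u l.
Proof. intro H. exact (hs_complete X u H). Qed.

Lemma conv_unique (u : nat -> X) l k : converges u l -> converges u k -> l = k.
Proof.
  intros Hl Hk. apply vsub_zero. apply nrm_eq0.
  destruct (Rle_lt_or_eq_dec 0 (nrm (vsub l k)) (nrm_ge0 _)) as [Hp|]; [|auto].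
  exfalso. set (e := nrm (vsub l k) / 2).
  destruct (Hl e ltac:(unfold e; lra)) as [N1 H1]. destruct (Hk e ltac:(unfold e; lra)) as [N2 H2].
  specialize (H1 (N1 + N2)%nat ltac:(lia)). specialize (H2 (N1+N2)%nat ltac:(lia)).
  pose proof (nrm_sub3 l (u (N1+N2)%nat) k). rewrite (nrm_sub_sym l (u (N1+N2)%nat)) in H. unfold e in *. lra.
Qed.

Lemma conv_tail (u : nat -> X) l n b : converges u l ->
  (forall m, (n <= m)%nat -> nrm (vsub (u m) (u n)) <= b) -> nrm (vsub l (u n)) <= b.
Proof.
  intros Hl Hb. apply Rnot_lt_le. intro Hc.
  set (e := nrm (vsub l (u n)) - b).
  destruct (Hl e ltac:(unfold e; lra)) as [N H].
  specialize (H (N + n)%nat ltac:(lia)). specialize (Hb (N+n)%nat ltac:(lia)).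
  pose proof (nrm_sub3 l (u (N+n)%nat) (u n)). rewrite (nrm_sub_sym l (u (N+n)%nat)) in H0. unfold e in *. lra.
Qed.

Lemma conv_lin (u v : nat -> X) l k a : converges u l -> converges v k ->
  converges (fun n => vadd (u n) (vscal a (v n))) (vadd l (vscal a k)).
Proof.
  intros Hu Hv eps He.
  destruct (Hu (eps/2) ltac:(lra)) as [N1 H1].
  destruct (Hv (eps / (2 * (Cmod a + 1)))) as [N2 H2].
  { pose proof (Cmod_ge0 a). apply Rdiv_lt_0_compat; lra. }
  exists (N1 + N2)%nat. intros n Hn.
  replace (vsub (vadd (u n) (vscal a (v n))) (vadd l (vscal a k))) with
     (vadd (vsub (u n) l) (vscal a (vsub (v n) k))) by veq.
  eapply Rle_lt_trans. apply nrm_triangle. rewrite nrm_scal.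
  specialize (H1 n ltac:(lia)). specialize (H2 n ltac:(lia)).
  pose proof (Cmod_ge0 a).
  assert (Cmod a * nrm (vsub (v n) k) <= Cmod a * (eps / (2 * (Cmod a + 1)))) by (apply Rmult_le_compat_l; lra).
  assert (Cmod a * (eps / (2 * (Cmod a + 1))) < eps / 2).
  { unfold Rdiv. rewrite Rinv_mult.
    replace (Cmod a * (eps * (/ 2 * / (Cmod a + 1)))) with ((eps/2) * (Cmod a / (Cmod a + 1))) by (field; lra).
    assert (Cmod a / (Cmod a + 1) < 1) by (apply (Rmult_lt_reg_r (Cmod a + 1)); [lra|]; unfold Rdiv; rewrite Rmult_assoc, Rinv_l; lra).
    nra. }
  lra.
Qed.

Lemma conv_const (l : X) : converges (fun _ : nat => l) l.
Proof. intros e He. exists 0%nat. intros. replace (vsub l l) with (@hs_zero X) by veq. rewrite nrm_zero. auto. Qed.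

End Conv.


Section HT.
Context {X : HilbertSpace}.
Implicit Types u v w : X.

Lemma pow3_pos n : 0 < 3 ^ n.
Proof. apply pow_lt; lra. Qed.

Lemma unit_vec w : w <> hs_zero -> 0 < nrm w /\ nrm (vscal (RtoC (/ nrm w)) w) = 1 /\
   ip (vscal (RtoC (/ nrm w)) w) w = RtoC (nrm w).
Proof.
  intro Hw. assert (Hp : 0 < nrm w).
  { destruct (Rle_lt_or_eq_dec _ _ (nrm_ge0 w)); auto. exfalso; apply Hw, nrm_eq0; auto. }
  split; [auto|split].
  - rewrite nrm_scal, Cmod_R, Rabs_right. field; lra.
    apply Rle_ge, Rlt_le, Rinv_0_lt_compat; auto.
  - rewrite ip_scal_l, ip_self_eta, <- nrm_sq. apply C_ext; simpl; field; lra.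
Qed.

Lemma fix_zero (z : X) : z = vadd z (vscal C1 z) -> z = hs_zero.
Proof. intro E. transitivity (vsub (vadd z (vscal C1 z)) z); [veq|]. rewrite <- E. veq. Qed.

Lemma Sokal x e w r : ip e w = RtoC (nrm w) -> 0 <= r ->
  r * nrm w <= Cmod (ip (vadd x (vscal (RtoC r) e)) w) \/
  r * nrm w <= Cmod (ip (vsub x (vscal (RtoC r) e)) w).
Proof.
  intros He Hr. destruct (Rle_dec (r * nrm w) (Cmod (ip (vadd x (vscal (RtoC r) e)) w))); [left; auto|right].
  assert (E : ip (vsub x (vscal (RtoC r) e)) w =
     Cadd (ip (vadd x (vscal (RtoC r) e)) w) (Copp (RtoC (2 * r * nrm w)))).
  { rewrite ip_sub_l, ip_add_l, ip_scal_l, He. apply C_ext; simpl; ring. }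
  pose proof (Cmod_add (ip (vadd x (vscal (RtoC r) e)) w) (Copp (ip (vsub x (vscal (RtoC r) e)) w))) as H.
  replace (Cadd (ip (vadd x (vscal (RtoC r) e)) w) (Copp (ip (vsub x (vscal (RtoC r) e)) w))) with (RtoC (2 * r * nrm w)) in H
    by (rewrite E; ring).
  rewrite Cmod_opp, Cmod_R, Rabs_right in H. pose proof (nrm_ge0 w). lra.
  pose proof (nrm_ge0 w). apply Rle_ge. nra.
Qed.

Lemma HellingerToeplitz (R : X -> X) :
  (forall a u v, R (vadd u (vscal a v)) = vadd (R u) (vscal a (R v))) ->
  (forall u v, ip (R u) v = ip u (R v)) ->
  exists c, forall u, nrm (R u) <= c * nrm u.
Proof.
  intros Rlin Rsym. apply NNPP. intro Hn.
  assert (Hs : forall n : nat, exists y, nrm y <= 1 /\ 2 * INR (n+1) * 3 ^ (n+1) < nrm (R y)).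
  { intro n. set (c := 2 * INR (n+1) * 3 ^ (n+1)).
    apply NNPP. intro Hy. apply Hn. exists c. intro u.
    destruct (classic (u = hs_zero)) as [->|Hu].
    - assert (R hs_zero = hs_zero).
      { pose proof (Rlin C1 (@hs_zero X) (@hs_zero X)) as E.
        replace (vadd (@hs_zero X) (vscal C1 hs_zero)) with (@hs_zero X) in E by veq.
        apply fix_zero; exact E. }
      rewrite H, nrm_zero. lra.
    - destruct (unit_vec u Hu) as [Hp [H1 _]].
      apply Rnot_lt_le. intro Hc. apply Hy. exists (vscal (RtoC (/ nrm u)) u). split; [lra|].
      assert (E : R (vscal (RtoC (/ nrm u)) u) = vscal (RtoC (/ nrm u)) (R u)).
      { pose proof (Rlin (RtoC (/ nrm u)) hs_zero u) as E.
        replace (vadd hs_zero (vscal (RtoC (/ nrm u)) u)) with (vscal (RtoC (/ nrm u)) u) in E by veq.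
        rewrite E. pose proof (Rlin C1 (@hs_zero X) (@hs_zero X)) as E0.
        replace (vadd (@hs_zero X) (vscal C1 hs_zero)) with (@hs_zero X) in E0 by veq.
        assert (Z : R hs_zero = hs_zero) by (apply fix_zero; exact E0).
        rewrite Z. veq. }
      rewrite E, nrm_scal, Cmod_R, Rabs_right.
      + apply (Rmult_lt_reg_l (nrm u)); auto. field_simplify; [|lra]. lra.
      + apply Rle_ge, Rlt_le, Rinv_0_lt_compat; auto. }
  apply choice in Hs. destruct Hs as [y Hy].
  set (w := fun n => R (y n)).
  assert (Hw : forall n, 0 < nrm (w n)).
  { intro n. destruct (Hy n). pose proof (pow3_pos (n+1)). pose proof (pos_INR (n+1)). unfold w; nra. }
  assert (Hwb : forall x n, Cmod (ip x (w n)) <= nrm (R x)).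
  { intros x n. unfold w. rewrite <- Rsym. apply ip_bound. apply (proj1 (Hy n)). }
  set (e := fun n => vscal (RtoC (/ nrm (w n))) (w n)).
  assert (He : forall n, nrm (e n) = 1 /\ ip (e n) (w n) = RtoC (nrm (w n))).
  { intro n. assert (w n <> hs_zero) by (intro E; specialize (Hw n); rewrite E, nrm_zero in Hw; lra).
    destruct (unit_vec (w n) H) as [_ [A B]]. auto. }
  set (r := fun n : nat => / 3 ^ (n+1)).
  assert (Hr : forall n, 0 < r n) by (intro; apply Rinv_0_lt_compat, pow3_pos).
  set (step := fun n x => if Rle_dec (r n * nrm (w n)) (Cmod (ip (vadd x (vscal (RtoC (r n)) (e n))) (w n)))
                     then vadd x (vscal (RtoC (r n)) (e n)) else vsub x (vscal (RtoC (r n)) (e n))).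
  set (xs := fix xs (n : nat) : X := match n with O => hs_zero | S m => step m (xs m) end).
  assert (HA : forall n, r n * nrm (w n) <= Cmod (ip (xs (S n)) (w n))).
  { intro n. simpl. unfold step. destruct (Rle_dec _ _) as [h|h]; auto.
    destruct (Sokal (xs n) (e n) (w n) (r n) (proj2 (He n)) (Rlt_le _ _ (Hr n))); tauto. }
  assert (HB : forall n, nrm (vsub (xs (S n)) (xs n)) = r n).
  { intro n. simpl. unfold step. destruct (Rle_dec _ _).
    - replace (vsub (vadd (xs n) (vscal (RtoC (r n)) (e n))) (xs n)) with (vscal (RtoC (r n)) (e n)) by veq.
      rewrite nrm_scal, Cmod_R, (proj1 (He n)), Rabs_right; [ring| apply Rle_ge, Rlt_le, Hr].
    - replace (vsub (vsub (xs n) (vscal (RtoC (r n)) (e n))) (xs n)) with (vopp (vscal (RtoC (r n)) (e n))) by veq.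
      rewrite nrm_opp, nrm_scal, Cmod_R, (proj1 (He n)), Rabs_right; [ring| apply Rle_ge, Rlt_le, Hr]. }
  assert (HC : forall n k, nrm (vsub (xs (n + k)%nat) (xs n)) <= / 3 ^ n / 2 * (1 - / 3 ^ k)).
  { intros n k. induction k.
    - replace (n + 0)%nat with n by lia. replace (vsub (xs n) (xs n)) with (@hs_zero X) by veq.
      rewrite nrm_zero. simpl. rewrite Rinv_1. lra.
    - replace (n + S k)%nat with (S (n + k)) by lia.
      eapply Rle_trans. apply (nrm_sub3 _ (xs (n+k)%nat)). rewrite HB. unfold r.
      replace (n + k + 1)%nat with (n + S k)%nat by lia.
      rewrite pow_add. simpl.
      pose proof (pow3_pos n). pose proof (pow3_pos k).
      assert (/ (3 ^ n * (3 * 3 ^ k)) = / 3 ^ n / 2 * (1 - / 3 ^ k) * 0 + / 3 ^ n * / 3 ^ k / 3) by (field; lra).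
      rewrite H1. replace (/ 3 ^ n / 2 * (1 - / (3 * 3 ^ k))) with (/ 3 ^ n / 2 * (1 - / 3 ^ k) + / 3 ^ n * / 3 ^ k / 3) by (field; lra).
      lra. }
  assert (HC' : forall n m, (n <= m)%nat -> nrm (vsub (xs m) (xs n)) <= / 3 ^ n / 2).
  { intros n m Hnm. replace m with (n + (m - n))%nat by lia.
    eapply Rle_trans. apply HC. pose proof (pow3_pos n). pose proof (pow3_pos (m-n)).
    assert (0 < / 3 ^ (m-n)) by (apply Rinv_0_lt_compat; auto).
    assert (0 < / 3 ^ n) by (apply Rinv_0_lt_compat; auto). nra. }
  destruct (cauchy_conv xs) as [x Hx].
  { intros eps Heps.
    destruct (pow_lt_1_zero (/3) ltac:(rewrite Rabs_right; [|apply Rle_ge, Rlt_le, Rinv_0_lt_compat]; lra) eps Heps) as [N HN].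
    exists N. intros m n Hm Hn0.
    eapply Rle_lt_trans. apply (nrm_sub3 _ (xs N)). rewrite (nrm_sub_sym (xs N)).
    pose proof (HC' N m Hm). pose proof (HC' N n Hn0). specialize (HN N (le_n _)).
    rewrite Rabs_right in HN. rewrite pow_inv in HN. lra. apply Rle_ge, pow_le. apply Rlt_le, Rinv_0_lt_compat; lra. }
  assert (HD : forall n, INR (n + 1) < nrm (R x)).
  { intro n. pose proof (conv_tail xs x (S n) _ Hx (HC' (S n))) as T.
    pose proof (HA n) as HAn. pose proof (Hwb x n) as Hwbn.
    pose proof (CS (vsub x (xs (S n))) (w n)) as CSn.
    pose proof (Cmod_add (ip x (w n)) (Copp (ip (vsub x (xs (S n))) (w n)))) as Tr.
    replace (Cadd (ip x (w n)) (Copp (ip (vsub x (xs (S n))) (w n)))) with (ip (xs (S n)) (w n)) in Tr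
      by (rewrite ip_sub_l; ring).
    rewrite Cmod_opp in Tr.
    pose proof (nrm_ge0 (w n)). pose proof (nrm_ge0 (vsub x (xs (S n)))).
    assert (Cmod (ip (vsub x (xs (S n))) (w n)) <= / 3 ^ S n / 2 * nrm (w n)).
    { eapply Rle_trans. apply CSn. apply Rmult_le_compat_r; auto. }
    unfold r in HAn. replace (S n) with (n+1)%nat in * by lia.
    destruct (Hy n) as [_ Hyn]. fold (w n) in Hyn.
    pose proof (pow3_pos (n+1)).
    assert (/ 3 ^ (n+1) * nrm (w n) / 2 <= Cmod (ip x (w n))) by lra.
    assert (INR (n+1) < / 3 ^ (n+1) * nrm (w n) / 2).
    { apply (Rmult_lt_reg_l (2 * 3 ^ (n+1))). nra. field_simplify; [|lra]. nra. }
    lra. }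
  destruct (archimed (nrm (R x))) as [Ha _].
  assert (0 <= up (nrm (R x)))%Z.
  { apply le_IZR. pose proof (nrm_ge0 (R x)). simpl. lra. }
  specialize (HD (Z.to_nat (up (nrm (R x))))). rewrite plus_INR, INR_IZR_INZ, Z2Nat.id in HD by auto. simpl in HD. lra.
Qed.

End HT.


Section Proj.
Context {X : HilbertSpace}.
Implicit Types u v w : X.

Lemma parallelogram u v :
  Cre (ip (vsub u v) (vsub u v)) + Cre (ip (vadd u v) (vadd u v)) = 2 * Cre (ip u u) + 2 * Cre (ip v v).
Proof.
  rewrite ip_sub_l, !ip_sub_r, ip_add_l, !ip_add_r. simpl. ring.
Qed.

Lemma min_orth z (V : X -> Prop) :
  (forall a u v, V u -> V v -> V (vadd u (vscal a v))) -> V hs_zero ->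
  (forall u, V u -> nrm z <= nrm (vsub z u)) -> forall u, V u -> ip u z = C0.
Proof.
  intros Vlin V0 Hmin u Hu.
  assert (Hc : ip z u = C0).
  { set (c := ip z u).
    set (t := / (Cre (ip u u) + 1)).
    pose proof (ip_self_re_ge0 u) as Hu0.
    assert (Ht : 0 < t) by (apply Rinv_0_lt_compat; lra).
    assert (HV : V (vscal (Cmul (RtoC t) c) u)).
    { replace (vscal (Cmul (RtoC t) c) u) with (vadd hs_zero (vscal (Cmul (RtoC t) c) u)) by veq. auto. }
    specialize (Hmin _ HV).
    pose proof (nrm_ge0 z). pose proof (nrm_ge0 (vsub z (vscal (Cmul (RtoC t) c) u))).
    assert (Hsq : nrm z * nrm z <= nrm (vsub z (vscal (Cmul (RtoC t) c) u)) * nrm (vsub z (vscal (Cmul (RtoC t) c) u))) by nra.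
    rewrite !nrm_sq in Hsq.
    rewrite ip_sub_l, !ip_sub_r, ip_scal_l, !ip_scal_r, ip_scal_l in Hsq.
    rewrite (ip_sym z u) in Hsq. fold c in Hsq.
    rewrite (ip_self_eta z), (ip_self_eta u) in Hsq.
    set (a := Cre (ip z z)) in *. set (b := Cre (ip u u)) in *.
    destruct c as [c1 c2] eqn:Ec. simpl in Hsq.
    assert (Htb : t * (b + 1) = 1) by (unfold t; field; lra).
    assert (Hs : (c1*c1+c2*c2) * (t * (2 - t*b)) <= 0).
    { match type of Hsq with _ <= ?r => replace ((c1*c1+c2*c2) * (t * (2 - t*b))) with (a - r) by ring end. lra. }
    assert (Hp : 0 < t * (2 - t * b)).
    { assert (t * b < 1) by nra. apply Rmult_lt_0_compat; lra. }
    assert (Hs2 : c1*c1+c2*c2 <= 0).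
    { destruct (Rle_dec (c1*c1+c2*c2) 0); auto. exfalso. nra. }
    apply C_ext; simpl; nra. }
  rewrite ip_sym, Hc. apply Cconj_0.
Qed.


Lemma proj_full (V : X -> Prop) :
  V hs_zero -> (forall a u v, V u -> V v -> V (vadd u (vscal a v))) ->
  (forall (s : nat -> X) l, (forall n, V (s n)) -> converges s l -> V l) ->
  (forall z, (forall v, V v -> ip v z = C0) -> z = hs_zero) ->
  forall g, V g.
Proof.
  intros V0 Vlin Vcl Vorth g.
  set (E := fun r => exists v, V v /\ r = - nrm (vsub g v)).
  destruct (completeness E) as [m [Hub Hlub]].
  { exists 0. intros r [v [_ ->]]. pose proof (nrm_ge0 (vsub g v)). lra. }
  { exists (- nrm (vsub g hs_zero)). exists hs_zero. auto. }
  set (d := - m).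
  assert (Hd1 : forall v, V v -> d <= nrm (vsub g v)).
  { intros v Hv. unfold d. assert (- nrm (vsub g v) <= m) by (apply Hub; exists v; auto). lra. }
  assert (Hd2 : forall eps, 0 < eps -> exists v, V v /\ nrm (vsub g v) < d + eps).
  { intros eps He. apply NNPP. intro Hn. assert (m <= m - eps). 
    { apply Hlub. intros r [v [Hv ->]]. apply Rnot_lt_le. intro Hc. apply Hn. exists v. split; auto. unfold d. lra. }
    lra. }
  assert (Hd0 : 0 <= d).
  { pose proof (Hd2 1 ltac:(lra)) as [v [_ Hv]]. apply Rnot_lt_le. intro Hc.
    destruct (Hd2 (- d) ltac:(lra)) as [v' [_ Hv']]. pose proof (nrm_ge0 (vsub g v')). lra. }
  assert (Hs : forall n : nat, exists v, V v /\ nrm (vsub g v) < d + / INR (S n)).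
  { intro n. apply Hd2. apply Rinv_0_lt_compat, lt_0_INR. lia. }
  apply choice in Hs. destruct Hs as [vs Hvs].
  set (K := 2 * d + 1).
  assert (Hsq : forall n, Cre (ip (vsub g (vs n)) (vsub g (vs n))) <= d * d + K * / INR (S n)).
  { intro n. destruct (Hvs n) as [_ H]. rewrite <- nrm_sq. pose proof (nrm_ge0 (vsub g (vs n))).
    assert (0 < / INR (S n) <= 1).
    { split. apply Rinv_0_lt_compat, lt_0_INR; lia. rewrite <- Rinv_1. apply Rinv_le_contravar. lra.
      rewrite S_INR. pose proof (pos_INR n). lra. }
    unfold K. nra. }
  assert (Hpar : forall n k, Cre (ip (vsub (vs n) (vs k)) (vsub (vs n) (vs k))) <= 2 * K * (/ INR (S n) + / INR (S k))).
  { intros n k. pose proof (parallelogram (vsub g (vs n)) (vsub g (vs k))) as P.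
    replace (vsub (vsub g (vs n)) (vsub g (vs k))) with (vsub (vs k) (vs n)) in P by veq.
    replace (vadd (vsub g (vs n)) (vsub g (vs k))) with (vscal (RtoC 2) (vsub g (vscal (RtoC (/2)) (vadd (vs n) (vs k))))) in P
      by (veq; apply C_ext; simpl; field).
    rewrite ip_scal_l, ip_scal_r in P.
    assert (Vm : V (vscal (RtoC (/2)) (vadd (vs n) (vs k)))).
    { replace (vscal (RtoC (/2)) (vadd (vs n) (vs k))) with (vadd hs_zero (vscal (RtoC (/2)) (vadd (vs n) (vscal C1 (vs k))))) by veq.
      apply Vlin; auto. apply Vlin; [apply Hvs|apply Hvs]. }
    pose proof (Hd1 _ Vm) as Hm. pose proof (nrm_ge0 (vsub g (vscal (RtoC (/ 2)) (vadd (vs n) (vs k))))).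
    assert (d * d <= Cre (ip (vsub g (vscal (RtoC (/ 2)) (vadd (vs n) (vs k)))) (vsub g (vscal (RtoC (/ 2)) (vadd (vs n) (vs k)))))).
    { rewrite <- nrm_sq. nra. }
    rewrite (ip_self_eta (vsub g (vscal (RtoC (/ 2)) (vadd (vs n) (vs k))))) in P. simpl in P.
    replace (vsub (vs n) (vs k)) with (vopp (vsub (vs k) (vs n))) by veq.
    replace (ip (vopp (vsub (vs k) (vs n))) (vopp (vsub (vs k) (vs n)))) with (ip (vsub (vs k) (vs n)) (vsub (vs k) (vs n)))
      by (rewrite ip_opp_l, ip_opp_r; ring).
    pose proof (Hsq n). pose proof (Hsq k). lra. }
  destruct (cauchy_conv vs) as [v Hv].
  { intros eps He.
    destruct (archimed (4 * K / (eps * eps))) as [Ha _].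
    assert (0 <= up (4 * K / (eps * eps)))%Z.
    { apply le_IZR. assert (0 <= 4 * K / (eps * eps)). { unfold K. apply Rmult_le_pos. lra. apply Rlt_le, Rinv_0_lt_compat. nra. } simpl. lra. }
    exists (Z.to_nat (up (4 * K / (eps * eps)))). intros m1 n1 Hm Hn.
    set (N := Z.to_nat (up (4 * K / (eps * eps)))) in *.
    assert (HN : 4 * K / (eps * eps) < INR (S N)).
    { unfold N. rewrite S_INR, INR_IZR_INZ, Z2Nat.id by auto. lra. }
    assert (Hi : forall j, (N <= j)%nat -> / INR (S j) <= / INR (S N)).
    { intros j Hj. apply Rinv_le_contravar. apply lt_0_INR; lia. apply le_INR; lia. }
    pose proof (Hpar m1 n1) as Hp1. pose proof (Hi m1 Hm). pose proof (Hi n1 Hn).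
    assert (HK : 0 < K) by (unfold K; lra).
    assert (2 * K * (/ INR (S m1) + / INR (S n1)) < eps * eps).
    { assert (4 * K * / INR (S N) < eps * eps).
      { assert (0 < INR (S N)) by (apply lt_0_INR; lia).
        apply (Rmult_lt_reg_r (INR (S N))); auto. rewrite Rmult_assoc, Rinv_l by lra.
        apply (Rmult_lt_reg_r (/ (eps * eps))). apply Rinv_0_lt_compat; nra.
        replace (eps * eps * INR (S N) * / (eps * eps)) with (INR (S N)) by (field; lra). unfold Rdiv in HN. lra. }
      nra. }
    rewrite <- nrm_sq in Hp1. pose proof (nrm_ge0 (vsub (vs m1) (vs n1))). nra. }
  assert (HvV : V v) by (apply (Vcl vs); auto; apply Hvs).
  assert (Hgv : nrm (vsub g v) <= d).
  { apply Rnot_lt_le. intro Hc. set (e := (nrm (vsub g v) - d) / 2).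
    destruct (Hv e ltac:(unfold e; lra)) as [N1 HN1].
    destruct (archimed (/ e)) as [Ha _].
    assert (0 <= up (/ e))%Z. { apply le_IZR. assert (0 < / e) by (apply Rinv_0_lt_compat; unfold e; lra). simpl. lra. }
    set (n := (N1 + Z.to_nat (up (/ e)))%nat).
    specialize (HN1 n ltac:(unfold n; lia)). destruct (Hvs n) as [_ Hn].
    assert (/ INR (S n) < e).
    { assert (/ e < INR (S n)). { unfold n. rewrite S_INR, plus_INR, (INR_IZR_INZ (Z.to_nat _)), Z2Nat.id by auto. pose proof (pos_INR N1). lra. }
      assert (0 < e) by (unfold e; lra).
      rewrite <- (Rinv_inv e). apply Rinv_lt_contravar; [apply Rmult_lt_0_compat; [apply Rinv_0_lt_compat; auto | apply lt_0_INR; lia] | auto]. }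
    pose proof (nrm_sub3 g (vs n) v). unfold e in *. lra. }
  assert (Hz : vsub g v = hs_zero).
  { apply Vorth. apply (min_orth (vsub g v) V Vlin V0).
    intros u Hu. replace (vsub (vsub g v) u) with (vsub g (vadd v (vscal C1 u))) by veq.
    pose proof (Hd1 _ (Vlin C1 v u HvV Hu)). lra. }
  apply vsub_zero in Hz. subst g. auto.
Qed.

End Proj.


Section Prod.
Context (X Y : HilbertSpace).

Definition padd (a b : X * Y) : X * Y := (vadd (fst a) (fst b), vadd (snd a) (snd b)).
Definition popp (a : X * Y) : X * Y := (vopp (fst a), vopp (snd a)).
Definition pscal (c : C) (a : X * Y) : X * Y := (vscal c (fst a), vscal c (snd a)).
Definition pip (a b : X * Y) : C := Cadd (ip (fst a) (fst b)) (ip (snd a) (snd b)).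

Lemma sqrt_add_le a b : 0 <= a -> 0 <= b -> sqrt (a + b) <= sqrt a + sqrt b.
Proof.
  intros Ha Hb. pose proof (sqrt_pos a); pose proof (sqrt_pos b).
  apply Rsqr_incr_0_var; [|lra]. unfold Rsqr. rewrite sqrt_sqrt by lra.
  replace ((sqrt a + sqrt b) * (sqrt a + sqrt b)) with (sqrt a * sqrt a + sqrt b * sqrt b + 2 * sqrt a * sqrt b) by ring.
  rewrite !sqrt_sqrt by lra. nra.
Qed.

Definition ProdH : HilbertSpace.
Proof.
  refine (Build_HilbertSpace (X * Y) (hs_zero, hs_zero) padd popp pscal pip _ _ _ _ _ _ _ _ _ _ _ _ _ _).
  - intros [] [] []; unfold padd; simpl; f_equal; apply hs_add_assoc.
  - intros [] []; unfold padd; simpl; f_equal; apply hs_add_comm.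
  - intros []; unfold padd; simpl; f_equal; apply hs_add_0.
  - intros []; unfold padd, popp; simpl; f_equal; apply hs_add_opp.
  - intros a b []; unfold pscal; simpl; f_equal; apply hs_scal_assoc.
  - intros []; unfold pscal; simpl; f_equal; apply hs_scal_1.
  - intros a [] []; unfold pscal, padd; simpl; f_equal; apply hs_scal_distr_v.
  - intros a b []; unfold pscal, padd; simpl; f_equal; apply hs_scal_distr_s.
  - intros [] [] []; unfold pip, padd; simpl. rewrite !ip_add_l. ring.
  - intros a [] []; unfold pip, pscal; simpl. rewrite !ip_scal_l. ring.
  - intros [] []; unfold pip; simpl. rewrite Cconj_add, <- !hs_inner_sym. reflexivity.
  - intros []; unfold pip; simpl. pose proof (ip_self_re_ge0 h). pose proof (ip_self_re_ge0 h0). lra.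
  - intros [a b] E; unfold pip in E; simpl in E.
    pose proof (ip_self_re_ge0 a). pose proof (ip_self_re_ge0 b).
    pose proof (f_equal Cre E). simpl in H1.
    assert (Cre (ip a a) = 0) by (lra). assert (Cre (ip b b) = 0) by (lra).
    apply ip_self_zero in H2. apply ip_self_zero in H3. subst. reflexivity.
  - intros u Hu.
    assert (Hc1 : forall eps, 0 < eps -> exists N, forall m n, (N <= m)%nat -> (N <= n)%nat ->
       nrm (vsub (fst (u m)) (fst (u n))) < eps).
    { intros e He. destruct (Hu e He) as [N HN]. exists N. intros m n Hm Hn. specialize (HN m n Hm Hn).
      eapply Rle_lt_trans; [|apply HN]. apply sqrt_le_1_alt. unfold pip. simpl.
      pose proof (ip_self_re_ge0 (vsub (snd (u m)) (snd (u n)))). unfold vsub, vadd, vopp in *. lra. }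
    assert (Hc2 : forall eps, 0 < eps -> exists N, forall m n, (N <= m)%nat -> (N <= n)%nat ->
       nrm (vsub (snd (u m)) (snd (u n))) < eps).
    { intros e He. destruct (Hu e He) as [N HN]. exists N. intros m n Hm Hn. specialize (HN m n Hm Hn).
      eapply Rle_lt_trans; [|apply HN]. apply sqrt_le_1_alt. unfold pip. simpl.
      pose proof (ip_self_re_ge0 (vsub (fst (u m)) (fst (u n)))). unfold vsub, vadd, vopp in *. lra. }
    destruct (cauchy_conv _ Hc1) as [l1 H1]. destruct (cauchy_conv _ Hc2) as [l2 H2].
    exists (l1, l2). intros e He.
    destruct (H1 (e/2) ltac:(lra)) as [N1 HN1]. destruct (H2 (e/2) ltac:(lra)) as [N2 HN2].
    exists (N1 + N2)%nat. intros n Hn. specialize (HN1 n ltac:(lia)). specialize (HN2 n ltac:(lia)).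
    unfold pip; simpl. eapply Rle_lt_trans. apply sqrt_add_le; apply hs_inner_pos.
    exact (Rplus_lt_compat _ _ _ _ HN1 HN2) || (idtac; fold (vsub (fst (u n)) l1) (vsub (snd (u n)) l2); unfold nrm in HN1, HN2; lra).
Defined.

End Prod.


Section Rel.
Context {X : HilbertSpace}.
Implicit Types u v w : X.
Variable T : X -> X -> Prop.
Hypothesis Tlin : linrel T.
Hypothesis Tsym : symmetric_rel T.

Lemma T0 : T hs_zero hs_zero.
Proof. apply Tlin. Qed.

Lemma Tdiff u u' v v' : T u u' -> T v v' -> T (vsub u v) (vsub u' v').
Proof.
  intros H1 H2. pose proof (proj2 Tlin (Copp C1) _ _ _ _ H1 H2) as E.
  replace (vsub u v) with (vadd u (vscal (Copp C1) v)) by veq.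
  replace (vsub u' v') with (vadd u' (vscal (Copp C1) v')) by veq. auto.
Qed.

Lemma Tadd u u' v v' : T u u' -> T v v' -> T (vadd u v) (vadd u' v').
Proof.
  intros H1 H2. pose proof (proj2 Tlin C1 _ _ _ _ H1 H2) as E.
  replace (vadd u v) with (vadd u (vscal C1 v)) by veq.
  replace (vadd u' v') with (vadd u' (vscal C1 v')) by veq. auto.
Qed.

Lemma Tscal a u u' : T u u' -> T (vscal a u) (vscal a u').
Proof.
  intros H1. pose proof (proj2 Tlin a _ _ _ _ T0 H1) as E.
  replace (vscal a u) with (vadd hs_zero (vscal a u)) by veq.
  replace (vscal a u') with (vadd hs_zero (vscal a u')) by veq. auto.
Qed.

Lemma sym_im u u' : T u u' -> Cim (ip u' u) = 0.
Proof.
  intro H. pose proof (Tsym _ _ _ _ H H) as E. rewrite (ip_sym u' u) in E.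
  apply (f_equal Cim) in E. simpl in E. lra.
Qed.

Lemma adj_lin a g g' k k' : adj T g g' -> adj T k k' -> adj T (vadd g (vscal a k)) (vadd g' (vscal a k')).
Proof.
  intros H1 H2 f f' Hf. rewrite !ip_add_r, !ip_scal_r, (H1 f f' Hf), (H2 f f' Hf). reflexivity.
Qed.

Lemma sym_adj u u' : T u u' -> adj T u u'.
Proof. intros H f f' Hf. apply Tsym; auto. Qed.

Definition surjx (z : C) := forall g, exists u u', T u u' /\ vsub u' (vscal z u) = g.

Lemma ker_trivial (x : R) : surjx (RtoC x) -> forall u, adj T u (vscal (RtoC x) u) -> u = hs_zero.
Proof.
  intros Hs u Hu. destruct (Hs u) as [t [t' [Ht E]]].
  apply ip_self_zero. specialize (Hu t t' Ht).
  rewrite ip_scal_r, Cconj_R in Hu.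
  rewrite <- E at 1. rewrite ip_sub_l, Hu, ip_scal_l. simpl. ring.
Qed.

Lemma inj_of_surj (x : R) : surjx (RtoC x) ->
  forall u1 u1' u2 u2', T u1 u1' -> T u2 u2' ->
  vsub u1' (vscal (RtoC x) u1) = vsub u2' (vscal (RtoC x) u2) -> u1 = u2.
Proof.
  intros Hs u1 u1' u2 u2' H1 H2 E. apply vsub_zero. apply (ker_trivial x Hs).
  pose proof (Tdiff _ _ _ _ H1 H2) as D.
  replace (vscal (RtoC x) (vsub u1 u2)) with (vsub u1' u2').
  - apply sym_adj; auto.
  - apply vsub_zero. transitivity (vsub (vsub u1' (vscal (RtoC x) u1)) (vsub u2' (vscal (RtoC x) u2))); [veq|].
    rewrite E. veq.
Qed.

Lemma adj_sub_T (x : R) : surjx (RtoC x) -> forall v v', adj T v v' -> T v v'.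
Proof.
  intros Hs v v' Hv. destruct (Hs (vsub v' (vscal (RtoC x) v))) as [u [u' [Hu E]]].
  assert (Z : vsub v u = hs_zero).
  { apply (ker_trivial x Hs).
    replace (vscal (RtoC x) (vsub v u)) with (vsub v' u').
    - replace (vsub v' u') with (vadd v' (vscal (Copp C1) u')) by veq.
      replace (vsub v u) with (vadd v (vscal (Copp C1) u)) by veq.
      apply adj_lin; auto. apply sym_adj; auto.
    - apply vsub_zero. transitivity (vsub (vsub v' (vscal (RtoC x) v)) (vsub u' (vscal (RtoC x) u))); [veq|].
      rewrite E. veq. }
  apply vsub_zero in Z. subst u.
  replace v' with u'; auto.
  apply vsub_zero. transitivity (vsub (vsub u' (vscal (RtoC x) v)) (vsub v' (vscal (RtoC x) v))); [veq|].
  rewrite E. veq.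
Qed.

Section Res.
Variable x : R.
Hypothesis Hs : surjx (RtoC x).

Definition Rx (g : X) : X := epsilon (inhabits hs_zero) (fun u => exists u', T u u' /\ vsub u' (vscal (RtoC x) u) = g).

Lemma Rx_spec g : exists u', T (Rx g) u' /\ vsub u' (vscal (RtoC x) (Rx g)) = g.
Proof.
  unfold Rx. apply epsilon_spec. destruct (Hs g) as [u [u' H]]. exists u, u'. auto.
Qed.

Lemma Rx_unique g u u' : T u u' -> vsub u' (vscal (RtoC x) u) = g -> Rx g = u.
Proof.
  intros H E. destruct (Rx_spec g) as [v' [Hv Ev]].
  apply (inj_of_surj x Hs _ _ _ _ Hv H). rewrite Ev, E. reflexivity.
Qed.

Lemma Rx_lin a g k : Rx (vadd g (vscal a k)) = vadd (Rx g) (vscal a (Rx k)).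
Proof.
  destruct (Rx_spec g) as [u' [Hu Eu]]. destruct (Rx_spec k) as [v' [Hv Ev]].
  apply (Rx_unique _ _ _ (proj2 Tlin a _ _ _ _ Hu Hv)).
  transitivity (vadd (vsub u' (vscal (RtoC x) (Rx g))) (vscal a (vsub v' (vscal (RtoC x) (Rx k))))); [veq|].
  rewrite Eu, Ev. reflexivity.
Qed.

Lemma Rx_sym g k : ip (Rx g) k = ip g (Rx k).
Proof.
  destruct (Rx_spec g) as [u' [Hu Eu]]. destruct (Rx_spec k) as [v' [Hv Ev]].
  rewrite <- Eu at 2. rewrite <- Ev at 1.
  rewrite ip_sub_l, ip_sub_r, ip_scal_l, ip_scal_r, Cconj_R.
  rewrite (Tsym _ _ _ _ Hu Hv). ring.
Qed.

Lemma Rx_bounded : exists c, forall g, nrm (Rx g) <= c * nrm g.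
Proof. apply HellingerToeplitz. intros; apply Rx_lin. apply Rx_sym. Qed.

Lemma T_closed : closed_rel T.
Proof.
  intros s s' l l' Hn Hc Hc'.
  destruct Rx_bounded as [c Hc0].
  assert (Hu : forall n, Rx (vsub (s' n) (vscal (RtoC x) (s n))) = s n).
  { intro n. apply (Rx_unique _ _ _ (Hn n)). reflexivity. }
  assert (Hg : converges (fun n => vsub (s' n) (vscal (RtoC x) (s n))) (vsub l' (vscal (RtoC x) l))).
  { replace (vsub l' (vscal (RtoC x) l)) with (vadd l' (vscal (RtoC (-x)) l)) by (veq; apply C_ext; simpl; ring).
    replace (fun n => vsub (s' n) (vscal (RtoC x) (s n))) with (fun n => vadd (s' n) (vscal (RtoC (-x)) (s n))).
    apply (conv_lin s' s l' l (RtoC (-x)) Hc' Hc).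
    apply functional_extensionality. intro n. veq. apply C_ext; simpl; ring. }
  destruct (Rx_spec (vsub l' (vscal (RtoC x) l))) as [w' [Hw Ew]].
  set (w := Rx (vsub l' (vscal (RtoC x) l))) in *.
  assert (Hsw : converges s w).
  { intros e He.
    assert (Hc1 : 0 < Rabs c + 1) by (pose proof (Rabs_pos c); lra).
    destruct (Hg (e / (Rabs c + 1)) ltac:(apply Rdiv_lt_0_compat; lra)) as [N HN].
    exists N. intros n Hnn. rewrite <- Hu.
    replace (vsub (Rx (vsub (s' n) (vscal (RtoC x) (s n)))) w) with
       (Rx (vsub (vsub (s' n) (vscal (RtoC x) (s n))) (vsub l' (vscal (RtoC x) l)))).
    - eapply Rle_lt_trans. apply Hc0. specialize (HN n Hnn).
      pose proof (nrm_ge0 (vsub (vsub (s' n) (vscal (RtoC x) (s n))) (vsub l' (vscal (RtoC x) l)))).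
      apply Rle_lt_trans with (Rabs c * nrm (vsub (vsub (s' n) (vscal (RtoC x) (s n))) (vsub l' (vscal (RtoC x) l)))).
      apply Rmult_le_compat_r; auto. apply Rle_abs.
      apply Rle_lt_trans with (Rabs c * (e / (Rabs c + 1))).
      apply Rmult_le_compat_l; [apply Rabs_pos| lra].
      replace (Rabs c * (e / (Rabs c + 1))) with (e - e/(Rabs c+1)) by (field; lra).
      assert (0 < e/(Rabs c+1)) by (apply Rdiv_lt_0_compat; lra). lra.
    - unfold w. transitivity (Rx (vadd (vsub (s' n) (vscal (RtoC x) (s n))) (vscal (Copp C1) (vsub l' (vscal (RtoC x) l))))).
      f_equal; veq. rewrite Rx_lin. veq. }
  pose proof (conv_unique _ _ _ Hc Hsw) as Hlw. clearbody w. subst w.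
  replace l' with w'; auto.
  apply vsub_zero. transitivity (vsub (vsub w' (vscal (RtoC x) l)) (vsub l' (vscal (RtoC x) l))); [veq|].
  rewrite Ew. veq.
Qed.

End Res.

End Rel.


Lemma conv_cauchy {X : HilbertSpace} (u : nat -> X) l : converges u l ->
  forall eps, 0 < eps -> exists N, forall m n, (N <= m)%nat -> (N <= n)%nat -> nrm (vsub (u m) (u n)) < eps.
Proof.
  intros H e He. destruct (H (e/2) ltac:(lra)) as [N HN]. exists N. intros m n Hm Hn.
  pose proof (nrm_sub3 (u m) l (u n)). rewrite (nrm_sub_sym l (u n)) in H0.
  pose proof (HN m Hm). pose proof (HN n Hn). lra.
Qed.

Lemma conv_bounded_lin {X : HilbertSpace} (D : X -> X) K (u : nat -> X) l :
  (forall a u v, D (vadd u (vscal a v)) = vadd (D u) (vscal a (D v))) ->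
  (forall u, nrm (D u) <= K * nrm u) -> converges u l -> converges (fun n => D (u n)) (D l).
Proof.
  intros Dlin Dbd Hc e He.
  assert (HK : 0 < Rabs K + 1) by (pose proof (Rabs_pos K); lra).
  destruct (Hc (e / (Rabs K + 1)) ltac:(apply Rdiv_lt_0_compat; lra)) as [N HN].
  exists N. intros n Hn.
  replace (vsub (D (u n)) (D l)) with (D (vadd (u n) (vscal (Copp C1) l))).
  2: { rewrite Dlin. veq. }
  replace (vadd (u n) (vscal (Copp C1) l)) with (vsub (u n) l) by veq.
  eapply Rle_lt_trans. apply Dbd. specialize (HN n Hn).
  pose proof (nrm_ge0 (vsub (u n) l)).
  apply Rle_lt_trans with (Rabs K * nrm (vsub (u n) l)).
  apply Rmult_le_compat_r; auto. apply Rle_abs.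
  apply Rle_lt_trans with (Rabs K * (e / (Rabs K + 1))).
  apply Rmult_le_compat_l; [apply Rabs_pos| lra].
  replace (Rabs K * (e / (Rabs K + 1))) with (e - e/(Rabs K+1)) by (field; lra).
  assert (0 < e/(Rabs K+1)) by (apply Rdiv_lt_0_compat; lra). lra.
Qed.

Section Shift.
Context {X : HilbertSpace}.
Implicit Types u v w : X.
Variable T : X -> X -> Prop.
Hypothesis Tlin : linrel T.
Hypothesis Tsym : symmetric_rel T.
Hypothesis Tadj : forall v v', adj T v v' -> T v v'.
Hypothesis Tcl : closed_rel T.
Variables D Dst : X -> X.
Hypothesis Dlin : forall a u v, D (vadd u (vscal a v)) = vadd (D u) (vscal a (D v)).
Variable K : R.
Hypothesis Dbd : forall u, nrm (D u) <= K * nrm u.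
Hypothesis Dadj : forall u v, ip (D u) v = ip u (Dst v).
Variable c : R.
Hypothesis Hc : 0 < c.
Hypothesis Dcoer : forall u, c * (nrm u * nrm u) <= Rabs (Cim (ip (D u) u)).

Lemma shift_lower u u' : T u u' -> c * nrm u <= nrm (vsub u' (D u)).
Proof.
  intro H. pose proof (Dcoer u) as C1.
  assert (E : Cim (ip (vsub u' (D u)) u) = - Cim (ip (D u) u)).
  { rewrite ip_sub_l. simpl. rewrite (sym_im T Tsym u u' H). ring. }
  pose proof (CS (vsub u' (D u)) u) as C2. pose proof (Cmod_ge_im (ip (vsub u' (D u)) u)) as C3.
  rewrite E, Rabs_Ropp in C3.
  pose proof (nrm_ge0 u). pose proof (nrm_ge0 (vsub u' (D u))).
  destruct (Rle_lt_or_eq_dec _ _ H0) as [Hp|Hz]; [|rewrite <- Hz; lra].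
  apply (Rmult_le_reg_r (nrm u)); auto. lra.
Qed.

Lemma shift_surj : forall g, exists u u', T u u' /\ vsub u' (D u) = g.
Proof.
  set (V := fun g => exists u u', T u u' /\ vsub u' (D u) = g).
  assert (D0 : D hs_zero = hs_zero).
  { pose proof (Dlin C1 hs_zero hs_zero) as E.
    replace (vadd hs_zero (vscal C1 (@hs_zero X))) with (@hs_zero X) in E by veq.
    apply fix_zero. exact E. }
  apply (proj_full V).
  - exists hs_zero, hs_zero. split. apply T0; auto. rewrite D0. veq.
  - intros a g k [u [u' [Hu Eu]]] [v [v' [Hv Ev]]].
    exists (vadd u (vscal a v)), (vadd u' (vscal a v')). split. apply Tlin; auto.
    rewrite Dlin. rewrite <- Eu, <- Ev. veq.
  - intros s l Hs Hcv. apply choice in Hs. destruct Hs as [us Hus]. apply choice in Hus. destruct Hus as [us' Hus].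
    assert (Hcu : exists ul, converges us ul).
    { apply cauchy_conv. intros e He. destruct (conv_cauchy s l Hcv (c * e) ltac:(nra)) as [N HN].
      exists N. intros m n Hm Hn. specialize (HN m n Hm Hn).
      destruct (Hus m) as [Hm1 Em]. destruct (Hus n) as [Hn1 En].
      pose proof (shift_lower _ _ (Tdiff T Tlin _ _ _ _ Hm1 Hn1)) as L.
      replace (vsub (vsub (us' m) (us' n)) (D (vsub (us m) (us n)))) with (vsub (s m) (s n)) in L.
      apply (Rmult_lt_reg_l c); auto. lra.
      rewrite <- Em, <- En. replace (vsub (us m) (us n)) with (vadd (us m) (vscal (Copp C1) (us n))) by veq.
      rewrite Dlin. veq. }
    destruct Hcu as [ul Hul].
    exists ul, (vadd l (D ul)). split.
    + apply (Tcl us us'); [apply Hus|auto|].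
      replace us' with (fun n => vadd (s n) (vscal C1 (D (us n)))).
      replace (vadd l (D ul)) with (vadd l (vscal C1 (D ul))) by veq.
      apply conv_lin; auto. apply (conv_bounded_lin D K); auto.
      apply functional_extensionality. intro n. destruct (Hus n) as [_ En]. rewrite <- En. veq.
    + veq.
  - intros z Hz.
    assert (Az : adj T z (Dst z)).
    { intros f f' Hf. specialize (Hz (vsub f' (D f)) (ex_intro _ f (ex_intro _ f' (conj Hf eq_refl)))).
      rewrite ip_sub_l, Dadj in Hz. apply (f_equal (fun t => Cadd t (ip f (Dst z)))) in Hz.
      replace (Cadd (Csub (ip f' z) (ip f (Dst z))) (ip f (Dst z))) with (ip f' z) in Hz by ring.
      rewrite Hz. ring. }
    apply Tadj in Az. pose proof (sym_im T Tsym _ _ Az) as I.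
    rewrite (ip_sym z (Dst z)), <- Dadj in I. simpl in I.
    pose proof (Dcoer z). assert (Cim (ip (D z) z) = 0) by lra. rewrite H0, Rabs_R0 in H.
    apply nrm_eq0. pose proof (nrm_ge0 z). destruct (Rle_lt_or_eq_dec 0 (nrm z) H1) as [Hp|Hq]; [|auto]. exfalso. assert (0 < c * (nrm z * nrm z)) by (apply Rmult_lt_0_compat; [auto| apply Rmult_lt_0_compat; auto]). lra.
Qed.

End Shift.


Section PairLemmas.
Context {X Y : HilbertSpace}.
Local Notation P := (ProdH X Y).

Lemma p_add (u v : P) : vadd u v = (vadd (fst u) (fst v), vadd (snd u) (snd v)).
Proof. reflexivity. Qed.
Lemma p_sub (u v : P) : vsub u v = (vsub (fst u) (fst v), vsub (snd u) (snd v)).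
Proof. reflexivity. Qed.
Lemma p_scal a (u : P) : vscal a u = (vscal a (fst u), vscal a (snd u)).
Proof. reflexivity. Qed.
Lemma p_opp (u : P) : vopp u = (vopp (fst u), vopp (snd u)).
Proof. reflexivity. Qed.
Lemma p_zero : (@hs_zero P) = (hs_zero, hs_zero).
Proof. reflexivity. Qed.
Lemma p_ip (u v : P) : ip u v = Cadd (ip (fst u) (fst v)) (ip (snd u) (snd v)).
Proof. reflexivity. Qed.
Lemma p_nrm (f : X) (h : Y) : @nrm P (f, h) = pnrm f h.
Proof.
  unfold pnrm. rewrite !nrm_sq. unfold nrm at 1. rewrite p_ip. reflexivity.
Qed.
Lemma pnrm_fst (f : X) (h : Y) : nrm f <= pnrm f h.
Proof.
  unfold pnrm. rewrite <- (sqrt_Rsqr (nrm f)) at 1 by apply nrm_ge0.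
  apply sqrt_le_1_alt. unfold Rsqr. pose proof (nrm_ge0 h). nra.
Qed.
Lemma pnrm_snd (f : X) (h : Y) : nrm h <= pnrm f h.
Proof.
  unfold pnrm. rewrite <- (sqrt_Rsqr (nrm h)) at 1 by apply nrm_ge0.
  apply sqrt_le_1_alt. unfold Rsqr. pose proof (nrm_ge0 f). nra.
Qed.
Lemma pnrm_0l (h : Y) : pnrm (@hs_zero X) h = nrm h.
Proof. unfold pnrm. rewrite nrm_zero. replace (0*0 + nrm h * nrm h) with (Rsqr (nrm h)) by (unfold Rsqr; ring).
  apply sqrt_Rsqr, nrm_ge0. Qed.
Lemma pnrm_0r (f : X) : pnrm f (@hs_zero Y) = nrm f.
Proof. unfold pnrm. rewrite nrm_zero. replace (nrm f * nrm f + 0 * 0) with (Rsqr (nrm f)) by (unfold Rsqr; ring).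
  apply sqrt_Rsqr, nrm_ge0. Qed.
Lemma p_nrm_fst (u : P) : nrm (fst u) <= nrm u.
Proof. destruct u. rewrite p_nrm. apply pnrm_fst. Qed.
Lemma p_nrm_snd (u : P) : nrm (snd u) <= nrm u.
Proof. destruct u. rewrite p_nrm. apply pnrm_snd. Qed.
Lemma p_nrm_sq (u : P) : nrm u * nrm u = nrm (fst u) * nrm (fst u) + nrm (snd u) * nrm (snd u).
Proof. rewrite !nrm_sq, p_ip. reflexivity. Qed.
End PairLemmas.

Lemma vscal_C0 {X : HilbertSpace} (u : X) : vscal C0 u = hs_zero.
Proof. veq. Qed.

Section Main.
Variables Hf Hc : HilbertSpace.
Variable A : Hf -> Hf -> Prop.
Variable G : Hf -> Hf -> Hc -> Hc -> Prop.
Variable H : Hf -> Hf -> Prop.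
Variable x : R.
Hypothesis HG : isometric G.

Local Notation P := (ProdH Hf Hc).
Definition TT (u u' : P) : Prop := main_transform G (fst u) (snd u) (fst u') (snd u').

Lemma G_lin a f f' h h' g g' k k' : G f f' h h' -> G g g' k k' ->
  G (vadd f (vscal a g)) (vadd f' (vscal a g')) (vadd h (vscal a k)) (vadd h' (vscal a k')).
Proof. apply (proj2 (proj1 HG)). Qed.
Lemma G_iso f f' h h' g g' k k' : G f f' h h' -> G g g' k k' ->
  Csub (ip f' g) (ip f g') = Csub (ip h' k) (ip h k').
Proof. apply (proj2 HG). Qed.
Lemma G0 : G hs_zero hs_zero hs_zero hs_zero.
Proof. apply (proj1 (proj1 HG)). Qed.

Lemma TT_lin : linrel TT.
Proof.
  split.
  - exists hs_zero. unfold TT; simpl. split; [veq|apply G0].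
  - intros a [f h] [f' k] [g k0] [g' k'] [h1 [E1 G1]] [h2 [E2 G2]]. cbn [fst snd] in *.
    exists (vadd h1 (vscal a h2)). rewrite ?p_add, ?p_scal. cbn [fst snd]. split. subst. veq. apply G_lin; auto.
Qed.

Lemma TT_sym : symmetric_rel TT.
Proof.
  intros [f h] [f' k] [g k0] [g' k'] [h1 [E1 G1]] [h2 [E2 G2]]. cbn [fst snd] in *. subst.
  rewrite !p_ip. cbn [fst snd]. pose proof (G_iso _ _ _ _ _ _ _ _ G1 G2) as I.
  rewrite ip_opp_l, ip_opp_r.
  apply (f_equal (fun t => Cadd t (Cadd (ip f g') (Copp (ip h1 k0))))) in I.
  transitivity (Cadd (Csub (ip f' g) (ip f g')) (Cadd (ip f g') (Copp (ip h1 k0)))). ring.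
  rewrite I. ring.
Qed.

Local Notation M := (weyl G (RtoC x)).

Lemma M_sym h h' k k' : M h h' -> M k k' -> ip h' k = ip h k'.
Proof.
  intros [f Gf] [g Gg]. pose proof (G_iso _ _ _ _ _ _ _ _ Gf Gg) as I.
  rewrite ip_scal_l, ip_scal_r, Cconj_R in I.
  apply (f_equal (fun t => Cadd t (ip h k'))) in I.
  replace (Cadd (Csub (Cmul (RtoC x) (ip f g)) (Cmul (RtoC x) (ip f g))) (ip h k')) with (ip h k') in I by ring.
  rewrite I. ring.
Qed.

Lemma b_to_a : in_resolvent2 (main_transform G) (RtoC x) ->
  selfadjoint M /\ in_resolvent (rel_plus_scal M (RtoC x)) C0.
Proof.
  intros [Hinj [Hsur [c Hbd]]].
  assert (Surj : forall k, exists h h', M h h' /\ vadd h' (vscal (RtoC x) h) = k).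
  { intro k. destruct (Hsur hs_zero (vopp k)) as [f [h [f' [h'' [Ht [E1 E2]]]]]].
    destruct Ht as [h' [Eh G1]]. subst h''.
    apply vsub_zero in E1.
    subst f'. exists h, h'. split. exists f; auto.
    transitivity (vopp (vsub (vopp h') (vscal (RtoC x) h))); [veq|]. rewrite E2. veq. }
  assert (Adj : forall g g', adj M g g' -> M g g').
  { intros k k' Hk. destruct (Surj (vadd k' (vscal (RtoC x) k))) as [h [h' [Mh Eh]]].
    assert (Az : adj M (vsub k h) (vscal (Copp (RtoC x)) (vsub k h))).
    { replace (vscal (Copp (RtoC x)) (vsub k h)) with (vadd k' (vscal (Copp C1) h')).
      replace (vsub k h) with (vadd k (vscal (Copp C1) h)) by veq.
      apply adj_lin; auto. intros t t' Mt. apply M_sym; auto.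
      vuse Eh. }
    assert (Z : vsub k h = hs_zero).
    { set (z := vsub k h) in *. destruct (Surj z) as [t [t' [Mt Et]]].
      apply ip_self_zero. specialize (Az t t' Mt). rewrite ip_scal_r in Az. Csimp.
      rewrite <- Et at 1. rewrite ip_add_l, Az, ip_scal_l. simpl. ring. }
    apply vsub_zero in Z. subst h. replace k' with h'; auto.
    vuse Eh. }
  split.
  - intros g g'. split; [|apply Adj]. intros Mg f f' Mf. apply M_sym; auto.
  - split; [|split].
    + intros h1 k1 h2 k2 [h1' [M1 E1]] [h2' [M2 E2]] Ek.
      rewrite !vscal_C0 in Ek. replace (vsub k1 hs_zero) with k1 in Ek by veq. replace (vsub k2 hs_zero) with k2 in Ek by veq.
      destruct M1 as [f1 G1]. destruct M2 as [f2 G2].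
      assert (T1 : main_transform G f1 h1 (vscal (RtoC x) f1) (vopp h1')) by (exists h1'; auto).
      assert (T2 : main_transform G f2 h2 (vscal (RtoC x) f2) (vopp h2')) by (exists h2'; auto).
      refine (proj2 (Hinj _ _ _ _ _ _ _ _ T1 T2 _ _)).
      * transitivity (@hs_zero Hf); [veq|veq].
      * transitivity (vopp k1). subst k1; veq. rewrite Ek. subst k2. veq.
    + intro g. destruct (Surj g) as [h [h' [Mh Eh]]]. exists h, g. split.
      exists h'. split; auto. rewrite vscal_C0. veq.
    + exists c. intros h k [h' [[f Gf] Ek]].
      assert (T1 : main_transform G f h (vscal (RtoC x) f) (vopp h')) by (exists h'; auto).
      specialize (Hbd _ _ _ _ T1).
      replace (vsub (vscal (RtoC x) f) (vscal (RtoC x) f)) with (@hs_zero Hf) in Hbd by veq.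
      rewrite pnrm_0l in Hbd. replace (vsub (vopp h') (vscal (RtoC x) h)) with (vopp (vsub k (vscal C0 h))) in Hbd
        by (subst k; veq).
      rewrite nrm_opp in Hbd. eapply Rle_trans; [apply (pnrm_snd f)|]. auto.
Qed.


Hypothesis HHG : forall f f', H f f' -> exists h h', G f f' h h'.
Hypothesis Hres : in_resolvent H (RtoC x).

Lemma a_to_surj : in_resolvent (rel_plus_scal M (RtoC x)) C0 -> surjx TT (RtoC x).
Proof.
  intros [_ [Msur _]] [g k].
  destruct (proj1 (proj2 Hres) g) as [fH [fH' [HfH EfH]]].
  destruct (HHG _ _ HfH) as [h1 [h1' G1]].
  destruct (Msur (vopp (vadd k (vadd h1' (vscal (RtoC x) h1))))) as [h2 [k2 [[h2' [[f2 G2] Ek2]] Ew]]].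
  rewrite vscal_C0 in Ew. replace (vsub k2 hs_zero) with k2 in Ew by veq.
  pose proof (G_lin C1 _ _ _ _ _ _ _ _ G1 G2) as G3.
  exists (vadd fH (vscal C1 f2), vadd h1 (vscal C1 h2)), (vadd fH' (vscal C1 (vscal (RtoC x) f2)), vopp (vadd h1' (vscal C1 h2'))).
  split.
  - exists (vadd h1' (vscal C1 h2')). split; auto.
  - rewrite p_sub, p_scal. cbn [fst snd]. f_equal.
    + rewrite <- EfH. veq.
    + subst k2. vuse Ew.
Qed.

Lemma surj_to_b : surjx TT (RtoC x) -> in_resolvent2 (main_transform G) (RtoC x).
Proof.
  intro Hs. split; [|split].
  - intros f1 h1 f1' h1' f2 h2 f2' h2' T1 T2 E1 E2.
    assert (E : (f1, h1) = (f2, h2) :> P).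
    { apply (inj_of_surj TT TT_lin TT_sym x Hs (f1, h1) (f1', h1') (f2, h2) (f2', h2') T1 T2).
      rewrite !p_sub, !p_scal. cbn [fst snd]. rewrite E1, E2. reflexivity. }
    inversion E. auto.
  - intros g k. destruct (Hs (g, k)) as [[f h] [[f' h'] [Ht E]]].
    rewrite p_sub, p_scal in E. cbn [fst snd] in E. inversion E.
    exists f, h, f', h'. auto.
  - destruct (Rx_bounded TT TT_lin TT_sym x Hs) as [c Hc0]. exists c.
    intros f h f' h' Ht.
    pose proof (Rx_unique TT TT_lin TT_sym x Hs (@vsub P (f', h') (@vscal P (RtoC x) (f, h))) (f, h) (f', h') Ht eq_refl) as E.
    specialize (Hc0 (@vsub P (f', h') (@vscal P (RtoC x) (f, h)))). rewrite E in Hc0.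
    rewrite p_nrm in Hc0. rewrite p_sub, p_scal in Hc0. cbn [fst snd] in Hc0. rewrite p_nrm in Hc0. exact Hc0.
Qed.

End Main.


Section Shifted.
Variables Hf Hc : HilbertSpace.
Variable G : Hf -> Hf -> Hc -> Hc -> Prop.
Variable x : R.
Hypothesis HG : isometric G.
Local Notation P := (ProdH Hf Hc).
Local Notation T := (TT Hf Hc G).
Hypothesis Hs : surjx T (RtoC x).

Definition Dm (l mu : C) (u : P) : P := (vscal l (fst u), vscal mu (snd u)).
Definition Dst (l mu : C) (u : P) : P := (vscal (Cconj l) (fst u), vscal (Cconj mu) (snd u)).
Definition cmin (l mu : C) := Rmin (Rabs (Cim l)) (Rabs (Cim mu)).
Definition pf (u : P) : P := (fst u, hs_zero).

Lemma Dm_lin l mu a (u v : P) : Dm l mu (vadd u (vscal a v)) = vadd (Dm l mu u) (vscal a (Dm l mu v)).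
Proof. unfold Dm. rewrite !p_add, !p_scal. cbn [fst snd]. f_equal; veq. Qed.

Lemma Dm_bd l mu (u : P) : nrm (Dm l mu u) <= (Cmod l + Cmod mu) * nrm u.
Proof.
  pose proof (Cmod_ge0 l). pose proof (Cmod_ge0 mu). pose proof (nrm_ge0 u).
  apply Rsqr_incr_0_var; [|nra]. unfold Rsqr. rewrite p_nrm_sq. unfold Dm. cbn [fst snd].
  rewrite !nrm_scal.
  replace ((Cmod l + Cmod mu) * nrm u * ((Cmod l + Cmod mu) * nrm u)) with ((Cmod l + Cmod mu) * (Cmod l + Cmod mu) * (nrm u * nrm u)) by ring.
  rewrite p_nrm_sq. pose proof (nrm_ge0 (fst u)). pose proof (nrm_ge0 (snd u)).
  assert (Cmod l * Cmod l <= (Cmod l + Cmod mu) * (Cmod l + Cmod mu)) by nra.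
  assert (Cmod mu * Cmod mu <= (Cmod l + Cmod mu) * (Cmod l + Cmod mu)) by nra.
  nra.
Qed.

Lemma Dm_adj l mu (u v : P) : ip (Dm l mu u) v = ip u (Dst l mu v).
Proof. unfold Dm, Dst. rewrite !p_ip. cbn [fst snd]. rewrite !ip_scal_l, !ip_scal_r. Csimp. reflexivity. Qed.

Lemma cmin_pos l mu : 0 < Cim l * Cim mu -> 0 < cmin l mu.
Proof.
  intro H. unfold cmin. apply Rmin_glb_lt; apply Rabs_pos_lt; intro E; rewrite E in H; lra.
Qed.

Lemma Dm_coer l mu (u : P) : 0 < Cim l * Cim mu ->
  cmin l mu * (nrm u * nrm u) <= Rabs (Cim (ip (Dm l mu u) u)).
Proof.
  intro H. rewrite p_nrm_sq, p_ip. unfold Dm. cbn [fst snd]. rewrite !ip_scal_l.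
  rewrite (ip_self_eta (fst u)), (ip_self_eta (snd u)). rewrite <- !nrm_sq. simpl.
  set (a := nrm (fst u) * nrm (fst u)). set (b := nrm (snd u) * nrm (snd u)).
  assert (0 <= a) by (unfold a; nra). assert (0 <= b) by (unfold b; nra).
  pose proof (Rmin_l (Rabs (Cim l)) (Rabs (Cim mu))). pose proof (Rmin_r (Rabs (Cim l)) (Rabs (Cim mu))).
  fold (cmin l mu) in H2, H3.
  destruct (Rlt_dec 0 (Cim l)).
  - assert (0 < Cim mu) by nra. rewrite Rabs_right in H2, H3 by lra.
    rewrite Rabs_right by nra. nra.
  - assert (Cim l < 0) by (destruct (Req_dec (Cim l) 0) as [E|E]; [rewrite E in H; lra|lra]).
    assert (Cim mu < 0) by nra. rewrite Rabs_left in H2, H3 by lra.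
    rewrite Rabs_left1 by nra. nra.
Qed.

Definition Q (l mu : C) (g : P) : P :=
  epsilon (inhabits hs_zero) (fun u => exists u', T u u' /\ vsub u' (Dm l mu u) = g).

Section QL.
Variables l mu : C.
Hypothesis Hlm : 0 < Cim l * Cim mu.

Lemma Tadj : forall v v', adj T v v' -> T v v'.
Proof. apply (adj_sub_T T (TT_sym Hf Hc G HG) x Hs). Qed.
Lemma Tcl : closed_rel T.
Proof. apply (T_closed T (TT_lin Hf Hc G HG) (TT_sym Hf Hc G HG) x Hs). Qed.

Lemma Q_spec g : exists u', T (Q l mu g) u' /\ vsub u' (Dm l mu (Q l mu g)) = g.
Proof.
  unfold Q. apply epsilon_spec.
  apply (shift_surj T (TT_lin Hf Hc G HG) (TT_sym Hf Hc G HG) Tadj Tcl (Dm l mu) (Dst l mu) (Dm_lin l mu)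
    (Cmod l + Cmod mu) (Dm_bd l mu) (Dm_adj l mu) (cmin l mu) (cmin_pos l mu Hlm) (fun u => Dm_coer l mu u Hlm)).
Qed.

Lemma Q_lower u u' : T u u' -> cmin l mu * nrm u <= nrm (vsub u' (Dm l mu u)).
Proof. apply (shift_lower T (TT_sym Hf Hc G HG) (Dm l mu) (cmin l mu) (fun u => Dm_coer l mu u Hlm)). Qed.

Lemma Q_unique g u u' : T u u' -> vsub u' (Dm l mu u) = g -> Q l mu g = u.
Proof.
  intros Hu E. destruct (Q_spec g) as [v' [Hv Ev]].
  pose proof (Q_lower _ _ (Tdiff T (TT_lin Hf Hc G HG) _ _ _ _ Hv Hu)) as L.
  replace (vsub (vsub v' u') (Dm l mu (vsub (Q l mu g) u))) with (@hs_zero P) in L.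
  - rewrite nrm_zero in L. pose proof (cmin_pos l mu Hlm). pose proof (nrm_ge0 (vsub (Q l mu g) u)).
    apply vsub_zero, nrm_eq0. nra.
  - replace (vsub (Q l mu g) u) with (vadd (Q l mu g) (vscal (Copp C1) u)) by veq.
    rewrite Dm_lin. apply vec_ext. intro w.
    pose proof (f_equal (fun t => ip t w) Ev) as E1. pose proof (f_equal (fun t => ip t w) E) as E2.
    cbv beta in E1, E2. ipexp. rewrite !ip_sub_l in E1, E2.
    transitivity (Csub (Csub (ip v' w) (ip (Dm l mu (Q l mu g)) w)) (Csub (ip u' w) (ip (Dm l mu u) w))).
    rewrite E1, E2. ring. ring.
Qed.

Lemma Q_lin a g k : Q l mu (vadd g (vscal a k)) = vadd (Q l mu g) (vscal a (Q l mu k)).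
Proof.
  destruct (Q_spec g) as [u' [Hu Eu]]. destruct (Q_spec k) as [v' [Hv Ev]].
  apply (Q_unique _ _ _ (proj2 (TT_lin Hf Hc G HG) a _ _ _ _ Hu Hv)).
  rewrite Dm_lin.
  transitivity (vadd (vsub u' (Dm l mu (Q l mu g))) (vscal a (vsub v' (Dm l mu (Q l mu k))))); [veq|].
  rewrite Eu, Ev. reflexivity.
Qed.

Lemma Q_bd g : nrm (Q l mu g) <= / cmin l mu * nrm g.
Proof.
  destruct (Q_spec g) as [u' [Hu Eu]]. pose proof (Q_lower _ _ Hu) as L. rewrite Eu in L.
  pose proof (cmin_pos l mu Hlm).
  apply (Rmult_le_reg_l (cmin l mu)); auto. rewrite <- Rmult_assoc, Rinv_r by lra. lra.
Qed.

Definition Rf (u : Hc) : Hc := snd (Q l mu (hs_zero, vopp u)).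

Lemma W_Q u : weyl G l (Rf u) (vsub u (vscal mu (Rf u))).
Proof.
  unfold Rf. destruct (Q_spec (hs_zero, vopp u)) as [u' [[h' [Eh Gu]] Eu]].
  destruct (Q l mu (hs_zero, vopp u)) as [f v]. destruct u' as [f' k]. cbn [fst snd] in *.
  unfold Dm in Eu. rewrite p_sub in Eu. cbn [fst snd] in Eu. inversion Eu as [[E1 E2]].
  apply vsub_zero in E1. subst f' k. exists f.
  replace (vsub u (vscal mu v)) with h'; auto.
  apply vec_ext. intro w. pose proof (f_equal (fun t => ip t w) E2) as E. cbv beta in E.
  ipexp. rewrite !ip_sub_l, ip_opp_l, ip_scal_l, ip_opp_l in E. use_eq E.
Qed.

Lemma W_unique u v1 v2 : weyl G l v1 (vsub u (vscal mu v1)) -> weyl G l v2 (vsub u (vscal mu v2)) -> v1 = v2.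
Proof.
  intros [f1 G1] [f2 G2].
  assert (T1 : T (f1, v1) (vscal l f1, vopp (vsub u (vscal mu v1)))) by (exists (vsub u (vscal mu v1)); auto).
  assert (T2 : T (f2, v2) (vscal l f2, vopp (vsub u (vscal mu v2)))) by (exists (vsub u (vscal mu v2)); auto).
  assert (E1 : Q l mu (hs_zero, vopp u) = (f1, v1)).
  { apply (Q_unique _ _ _ T1). unfold Dm. rewrite p_sub. cbn [fst snd]. f_equal; veq. }
  assert (E2 : Q l mu (hs_zero, vopp u) = (f2, v2)).
  { apply (Q_unique _ _ _ T2). unfold Dm. rewrite p_sub. cbn [fst snd]. f_equal; veq. }
  rewrite E1 in E2. inversion E2. auto.
Qed.

Lemma Rf_iff u v : weyl G l v (vsub u (vscal mu v)) <-> Rf u = v.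
Proof.
  split.
  - intro Hw. apply (W_unique u); auto. apply W_Q.
  - intros <-. apply W_Q.
Qed.

Lemma Rf_lin a u w : Rf (vadd u (vscal a w)) = vadd (Rf u) (vscal a (Rf w)).
Proof.
  unfold Rf. replace ((hs_zero, vopp (vadd u (vscal a w))) : P) with (vadd ((hs_zero, vopp u) : P) (vscal a ((hs_zero, vopp w) : P))).
  rewrite Q_lin. reflexivity.
  rewrite p_add, p_scal. cbn [fst snd]. f_equal; veq.
Qed.

Lemma Rf_bd u : nrm (Rf u) <= / cmin l mu * nrm u.
Proof.
  unfold Rf. eapply Rle_trans. apply p_nrm_snd. eapply Rle_trans. apply Q_bd.
  rewrite p_nrm, pnrm_0l, nrm_opp. right; reflexivity.
Qed.

End QL.

Lemma Q_resolvent l l' mu g : 0 < Cim l * Cim mu -> 0 < Cim l' * Cim mu ->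
  vsub (Q l' mu g) (Q l mu g) = vscal (Csub l' l) (Q l' mu (pf (Q l mu g))).
Proof.
  intros H1 H2. destruct (Q_spec l mu H1 g) as [w' [Hw Ew]].
  set (w := Q l mu g) in *.
  assert (E : Q l' mu (vadd g (vscal (Csub l l') (pf w))) = w).
  { apply (Q_unique l' mu H2 _ _ w' Hw). rewrite <- Ew. unfold Dm, pf. rewrite !p_sub, p_add, p_scal. cbn [fst snd].
    f_equal; veq. }
  rewrite Q_lin in E by auto.
  transitivity (vsub (Q l' mu g) (vadd (Q l' mu g) (vscal (Csub l l') (Q l' mu (pf w))))).
  f_equal. symmetry; exact E. veq.
Qed.

End Shifted.


Section Weyl.
Variables Hf Hc : HilbertSpace.
Variable G : Hf -> Hf -> Hc -> Hc -> Prop.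
Variable x : R.
Hypothesis HG : isometric G.
Local Notation P := (ProdH Hf Hc).
Local Notation T := (TT Hf Hc G).
Hypothesis Hs : surjx T (RtoC x).
Local Notation RF := (Rf Hf Hc G).
Local Notation QQ := (Q Hf Hc G).

Lemma weyl_lin l : linrel (weyl G l).
Proof.
  split.
  - exists hs_zero. replace (vscal l (@hs_zero Hf)) with (@hs_zero Hf) by veq. apply (G0 Hf Hc G HG).
  - intros a f f' g g' [f1 G1] [f2 G2]. exists (vadd f1 (vscal a f2)).
    replace (vscal l (vadd f1 (vscal a f2))) with (vadd (vscal l f1) (vscal a (vscal l f2))) by veq.
    apply (G_lin Hf Hc G HG); auto.
Qed.

Lemma weyl_im l h h' : weyl G l h h' -> exists f : Hf, Cim (ip h' h) = Cim l * (nrm f * nrm f).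
Proof.
  intros [f Gf]. exists f. pose proof (G_iso Hf Hc G HG _ _ _ _ _ _ _ _ Gf Gf) as I.
  rewrite ip_scal_l, ip_scal_r, (ip_sym h' h) in I. rewrite (ip_self_eta f) in I. rewrite nrm_sq.
  apply (f_equal Cim) in I. simpl in I. lra.
Qed.

Lemma weyl_adj_conj l h h' : weyl G (Cconj l) h h' -> adj (weyl G l) h h'.
Proof.
  intros [f Gf] k k' [g Gg]. pose proof (G_iso Hf Hc G HG _ _ _ _ _ _ _ _ Gg Gf) as I.
  rewrite ip_scal_l, ip_scal_r, Cconj_conj in I.
  apply (f_equal (fun t => Cadd t (ip k h'))) in I.
  replace (Cadd (Csub (Cmul l (ip g f)) (Cmul l (ip g f))) (ip k h')) with (ip k h') in I by ring.
  rewrite I. ring.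
Qed.

Lemma weyl_max l mu (Hlm : 0 < Cim l * Cim mu) (S : Hc -> Hc -> Prop) :
  linrel S -> (forall z, S z (vscal (Copp mu) z) -> z = hs_zero) ->
  (forall h h', weyl G l h h' -> S h h') -> forall h h', S h h' -> weyl G l h h'.
Proof.
  intros Slin Sz Sext h h' Sh.
  set (u := vadd h' (vscal mu h)).
  pose proof (W_Q Hf Hc G x HG Hs l mu Hlm u) as W.
  set (v := RF l mu u) in *.
  pose proof (Sext _ _ W) as Sv.
  assert (E : vsub h v = hs_zero).
  { apply Sz. pose proof (proj2 Slin (Copp C1) _ _ _ _ Sh Sv) as Sd.
    replace (vsub h v) with (vadd h (vscal (Copp C1) v)) by veq.
    replace (vscal (Copp mu) (vadd h (vscal (Copp C1) v))) with (vadd h' (vscal (Copp C1) (vsub u (vscal mu v)))); auto.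
    unfold u. veq. }
  apply vsub_zero in E. rewrite E. replace h' with (vsub u (vscal mu v)); auto. unfold u. rewrite E. veq.
Qed.

Lemma weyl_adj l : Cim l <> 0 -> forall h h', adj (weyl G l) h h' <-> weyl G (Cconj l) h h'.
Proof.
  intros Hl k k'. split; [|apply weyl_adj_conj].
  intro Hk.
  set (nu := mkC 0 (- Cim l)).
  assert (H1 : 0 < Cim (Cconj l) * Cim nu) by (simpl; assert (0 < Cim l * Cim l) by (apply Rsqr_pos_lt; auto); unfold Rsqr in *; nra).
  assert (H2 : 0 < Cim l * Cim (Cconj nu)) by (simpl; assert (0 < Cim l * Cim l) by (apply Rsqr_pos_lt; auto); unfold Rsqr in *; nra).
  set (u := vadd k' (vscal nu k)).
  pose proof (W_Q Hf Hc G x HG Hs (Cconj l) nu H1 u) as W.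
  set (v := RF (Cconj l) nu u) in *.
  set (z := vsub k v).
  assert (Az : adj (weyl G l) z (vscal (Copp nu) z)).
  { replace (vscal (Copp nu) z) with (vadd k' (vscal (Copp C1) (vsub u (vscal nu v)))).
    replace z with (vadd k (vscal (Copp C1) v)) by (unfold z; veq).
    apply adj_lin; auto. apply weyl_adj_conj; auto.
    unfold u, z. veq. }
  pose proof (W_Q Hf Hc G x HG Hs l (Cconj nu) H2 z) as Wt.
  set (t := RF l (Cconj nu) z) in *.
  specialize (Az _ _ Wt).
  assert (Z : z = hs_zero).
  { apply ip_self_zero. rewrite ip_sub_l, ip_scal_l, ip_scal_r in Az. Csimp.
    apply (f_equal Cre) in Az. simpl in Az. lra. }
  unfold z in Z. apply vsub_zero in Z. rewrite Z.
  replace k' with (vsub u (vscal nu v)); auto. unfold u. rewrite Z. veq.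
Qed.

Lemma Rf_deriv l mu : 0 < Cim l * Cim mu ->
  exists D : Hc -> Hc, forall eps, 0 < eps -> exists delta, 0 < delta /\
    forall eta, 0 < Cmod eta < delta -> 0 < Cim (Cadd l eta) * Cim mu -> forall u,
      nrm (vsub (vscal (Cinv eta) (vsub (RF (Cadd l eta) mu u) (RF l mu u))) (D u)) <= eps * nrm u.
Proof.
  intro Hlm.
  set (c0 := cmin l mu). assert (Hc0 : 0 < c0) by (apply cmin_pos; auto).
  assert (Hl : 0 < Rabs (Cim l)) by (apply Rabs_pos_lt; intro E; rewrite E in Hlm; lra).
  assert (Hm : 0 < Rabs (Cim mu)) by (apply Rabs_pos_lt; intro E; rewrite E in Hlm; lra).
  set (c1 := Rmin (Rabs (Cim l) / 2) (Rabs (Cim mu))).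
  assert (Hc1 : 0 < c1) by (apply Rmin_glb_lt; lra).
  exists (fun u => snd (QQ l mu (pf Hf Hc (QQ l mu (hs_zero, vopp u))))).
  intros eps He. exists (Rmin (Rabs (Cim l) / 2) (eps * c1 * c0 * c0)). split.
  { apply Rmin_glb_lt. lra. repeat apply Rmult_lt_0_compat; auto. }
  intros eta [Heta1 Heta2] Hl' u.
  set (l' := Cadd l eta) in *.
  assert (Hc' : c1 <= cmin l' mu).
  { unfold cmin, c1. pose proof (Cmod_ge_im eta).
    assert (Rabs (Cim l) / 2 <= Rabs (Cim l')).
    { unfold l'. simpl. pose proof (Rmin_l (Rabs (Cim l) / 2) (eps * c1 * c0 * c0)).
      pose proof (Rabs_triang_inv (Cim l) (- Cim eta)). replace (Cim l - - Cim eta) with (Cim l + Cim eta) in H1 by ring.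
      rewrite Rabs_Ropp in H1. lra. }
    unfold Rmin. repeat destruct Rle_dec; lra. }
  assert (Hlm' : 0 < cmin l' mu) by lra.
  set (g0 := (hs_zero, vopp u) : P).
  set (a := QQ l mu g0). set (h := pf Hf Hc a).
  assert (R1 := Q_resolvent Hf Hc G x HG Hs l l' mu g0 Hlm Hl').
  assert (R2 := Q_resolvent Hf Hc G x HG Hs l l' mu h Hlm Hl').
  fold a h in R1.
  assert (Eeta : Csub l' l = eta) by (unfold l'; ring).
  rewrite Eeta in R1, R2.
  assert (Hne : eta <> C0) by (intro E; rewrite E in Heta1; unfold Cmod in Heta1; simpl in Heta1; rewrite Rmult_0_l, Rplus_0_l, sqrt_0 in Heta1; lra).
  assert (E1 : vsub (RF l' mu u) (RF l mu u) = vscal eta (snd (QQ l' mu h))).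
  { unfold Rf. fold g0. fold a. change (snd (vsub (QQ l' mu g0) a) = snd (vscal eta (QQ l' mu h))).
    rewrite R1. reflexivity. }
  rewrite E1.
  assert (E2 : vscal (Cinv eta) (vscal eta (snd (QQ l' mu h))) = snd (QQ l' mu h)).
  { unfold vscal. rewrite hs_scal_assoc, Cmul_inv_l by auto. apply hs_scal_1. }
  rewrite E2.
  change (nrm (snd (vsub (QQ l' mu h) (QQ l mu h))) <= eps * nrm u).
  rewrite R2.
  change (nrm (vscal eta (snd (QQ l' mu (pf Hf Hc (QQ l mu h))))) <= eps * nrm u).
  rewrite nrm_scal.
  assert (B1 : nrm (snd (QQ l' mu (pf Hf Hc (QQ l mu h)))) <= / c1 * (/ c0 * (/ c0 * nrm u))).
  { eapply Rle_trans. apply p_nrm_snd. eapply Rle_trans. apply (Q_bd Hf Hc G x HG Hs l' mu Hl').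
    assert (Hpf : forall v : P, nrm (pf Hf Hc v) <= nrm v).
    { intros [f k]. unfold pf. cbn [fst]. rewrite p_nrm, pnrm_0r, p_nrm. apply pnrm_fst. }
    assert (Hi : / cmin l' mu <= / c1) by (apply Rinv_le_contravar; auto).
    assert (B2 : nrm (pf Hf Hc (QQ l mu h)) <= / c0 * (/ c0 * nrm u)).
    { eapply Rle_trans. apply Hpf. eapply Rle_trans. apply (Q_bd Hf Hc G x HG Hs l mu Hlm).
      fold c0. apply Rmult_le_compat_l. left; apply Rinv_0_lt_compat; auto.
      eapply Rle_trans. apply Hpf. unfold a. eapply Rle_trans. apply (Q_bd Hf Hc G x HG Hs l mu Hlm).
      fold c0. unfold g0. rewrite p_nrm, pnrm_0l, nrm_opp. right; reflexivity. }
    pose proof (nrm_ge0 (pf Hf Hc (QQ l mu h))).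
    apply Rle_trans with (/ cmin l' mu * (/ c0 * (/ c0 * nrm u))).
    apply Rmult_le_compat_l; auto. left; apply Rinv_0_lt_compat; auto.
    apply Rmult_le_compat_r; auto. pose proof (nrm_ge0 u).
    assert (0 < / c0) by (apply Rinv_0_lt_compat; auto). nra. }
  pose proof (Cmod_ge0 eta). pose proof (nrm_ge0 u).
  pose proof (Rmin_r (Rabs (Cim l) / 2) (eps * c1 * c0 * c0)).
  eapply Rle_trans. apply Rmult_le_compat_l; [auto|apply B1].
  replace (/ c1 * (/ c0 * (/ c0 * nrm u))) with (nrm u / (c1 * c0 * c0)) by (field; lra).
  assert (Cmod eta < eps * c1 * c0 * c0) by lra.
  assert (0 < c1 * c0 * c0) by (repeat apply Rmult_lt_0_compat; auto).
  apply Rle_trans with (eps * c1 * c0 * c0 * (nrm u / (c1 * c0 * c0))).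
  apply Rmult_le_compat_r. unfold Rdiv; apply Rmult_le_pos; [auto| left; apply Rinv_0_lt_compat; auto]. lra.
  right. field. lra.
Qed.

End Weyl.


Section Final.
Variables Hf Hc : HilbertSpace.
Variable G : Hf -> Hf -> Hc -> Hc -> Prop.
Variable x : R.
Hypothesis HG : isometric G.
Local Notation P := (ProdH Hf Hc).
Local Notation T := (TT Hf Hc G).
Hypothesis Hs : surjx T (RtoC x).

Lemma holo mu (PP : C -> Prop) : (forall l, PP l -> 0 < Cim l * Cim mu) ->
  resolvent_holomorphic (weyl G) mu PP.
Proof.
  intro HP. exists (fun l u => Rf Hf Hc G l mu u). split; [|split].
  - intros l Hl u v. apply (Rf_iff Hf Hc G x HG Hs l mu (HP l Hl)).
  - intros l Hl. split.
    + intros a u w. apply (Rf_lin Hf Hc G x HG Hs l mu (HP l Hl)).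
    + exists (/ cmin l mu). intro u. apply (Rf_bd Hf Hc G x HG Hs l mu (HP l Hl)).
  - intros l Hl. destruct (Rf_deriv Hf Hc G x HG Hs l mu (HP l Hl)) as [D HD]. exists D.
    intros eps He. destruct (HD eps He) as [delta [Hd Hdd]]. exists delta. split; [auto|].
    intros eta Heta Hp u. apply Hdd; auto.
Qed.

Lemma nevanlinna : nevanlinna_family (weyl G).
Proof.
  split; [|split; [|split; [|split]]].
  - intros l Hl. split; [apply weyl_lin; auto|split].
    + intros h h' Hw. destruct (weyl_im Hf Hc G HG l h h' Hw) as [f E]. rewrite E.
      pose proof (nrm_ge0 f). nra.
    + intros S Slin Sdis Sext. apply (weyl_max Hf Hc G x HG Hs l (mkC 0 1)); auto.
      simpl; lra.
      intros z Sz. specialize (Sdis _ _ Sz). rewrite ip_scal_l, (ip_self_eta z) in Sdis. simpl in Sdis.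
      apply ip_self_zero. pose proof (ip_self_re_ge0 z). lra.
  - intros l Hl. split; [apply weyl_lin; auto|split].
    + intros h h' Hw. destruct (weyl_im Hf Hc G HG l h h' Hw) as [f E]. rewrite E.
      pose proof (nrm_ge0 f). nra.
    + intros S Slin Sdis Sext. apply (weyl_max Hf Hc G x HG Hs l (mkC 0 (-1))); auto.
      simpl; lra.
      intros z Sz. specialize (Sdis _ _ Sz). rewrite ip_scal_l, (ip_self_eta z) in Sdis. simpl in Sdis.
      apply ip_self_zero. pose proof (ip_self_re_ge0 z). lra.
  - intros l Hl. apply (weyl_adj Hf Hc G x HG Hs l Hl).
  - exists (mkC 0 1). split. simpl; lra. apply holo. intros l Hl. simpl. lra.
  - exists (mkC 0 (-1)). split. simpl; lra. apply holo. intros l Hl. simpl. lra.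
Qed.

Lemma unitary_G : unitary G.
Proof.
  split; [auto|]. intros g g' k k'. split.
  - intros Gg f f' h h' Gf. apply (G_iso Hf Hc G HG _ _ _ _ _ _ _ _ Gf Gg).
  - intro B.
    assert (Ad : adj T ((g, k) : P) ((g', vopp k') : P)).
    { intros [f h] [f' m] [h' [Em Gf]]. cbn [fst snd] in *. subst m.
      rewrite !p_ip. cbn [fst snd]. rewrite ip_opp_l, ip_opp_r.
      pose proof (B f f' h h' Gf) as E. use_eq E. }
    apply (Tadj Hf Hc G x HG Hs) in Ad. destruct Ad as [h'' [E Gg]]. cbn [fst snd] in *.
    replace k' with h''; auto.
    transitivity (vopp (vopp h'')); [veq|]. rewrite <- E. veq.
Qed.

End Final.

Theorem mainTheorem13 (Hf Hc : HilbertSpace) (A : Hf -> Hf -> Prop)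
  (G : Hf -> Hf -> Hc -> Hc -> Prop) (H : Hf -> Hf -> Prop) (x : R) :
  linrel A -> closed_rel A -> symmetric_rel A ->
  isometric_boundary_pair A G ->
  selfadjoint H -> (forall f f', A f f' -> H f f') ->
  (forall f f', H f f' -> exists h h', G f f' h h') ->
  in_resolvent H (RtoC x) ->
  ((selfadjoint (weyl G (RtoC x)) /\ in_resolvent (rel_plus_scal (weyl G (RtoC x)) (RtoC x)) C0)
     <-> in_resolvent2 (main_transform G) (RtoC x)) /\
  ((selfadjoint (weyl G (RtoC x)) /\ in_resolvent (rel_plus_scal (weyl G (RtoC x)) (RtoC x)) C0) ->
     unitary_boundary_pair A G /\ nevanlinna_family (weyl G)).
Proof.
  intros HAlin HAcl HAsym [HGiso Hdense] HHsa HAH HHG Hres.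
  split.
  - split.
    + intros [Hsa Hr2]. apply (surj_to_b Hf Hc G x HGiso). apply (a_to_surj Hf Hc G H x HGiso HHG Hres Hr2).
    + intro Hb. apply (b_to_a Hf Hc G x HGiso Hb).
  - intros [Hsa Hr2]. pose proof (a_to_surj Hf Hc G H x HGiso HHG Hres Hr2) as Hs.
    split.
    + split; [apply (unitary_G Hf Hc G x HGiso Hs)|exact Hdense].
    + apply (nevanlinna Hf Hc G x HGiso Hs).
Qed.
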